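(* Let $P,PA$ be labelings, $c$ any command, and $\rho_1,\rho_2,\mu_1,\mu_2$ states. Assume $\mathtt b\notin\mathrm{UsedVars}(c)$, $\rho_1(\mathtt b)=\rho_2(\mathtt b)=0$, $|a|_{\mu_1}>0$ and $|a|_{\mu_2}>0$ for every array $a$, $\rho_1\sim_P\rho_2$, $\mu_1\sim_{PA}\mu_2$, and $\langle c,\rho_1,\mu_1\rangle\approx\langle c,\rho_2,\mu_2\rangle$. Let $(\hat c,P',PA')=\mathcal F(c,P,PA,\mathtt{true})$. Then $\langle T(\hat c),\rho_1,\mu_1,\mathtt{false}\rangle\approx_s\langle T(\hat c),\rho_2,\mu_2,\mathtt{false}\rangle$.
   Context: Language AWhile: scalar variables $X\in\mathcal V$, arrays $a\in\mathcal A$; $e::=n\mid X\mid\mathrm{op}_{\mathbb N}(e,\dots,e)\mid be\,?\,e_1:e_2$; $be::=\mathtt{true}\mid\mathtt{false}\mid\mathrm{cmp}(e,e)\mid\mathrm{op}_{\mathbb B}(be,\dots,be)$; $c::=\mathtt{skip}\mid X:=e\mid c_1;c_2\mid\mathtt{if}\ be\ \mathtt{then}\ c_1\ \mathtt{else}\ c_2\mid\mathtt{while}\ be\ \mathtt{do}\ c\mid X\leftarrow a[e]\mid a[e]\leftarrow e'$. Scalar state $\rho:\mathcal V\to\mathbb N$; array state $\mu$ with sizes $|a|_\mu$ and values $\mu(a)[i]$; $[\![\cdot]\!]_\rho$ pure evaluation. $\mathrm{UsedVars}(c)$: scalar variables occurring in $c$; $\mathtt b$ a reserved scalar variable. Sequential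 semantics: $X:=e\to\mathtt{skip}$ updating $X$; $c_1;c_2\xrightarrow{o}c_1';c_2$ if $c_1\xrightarrow{o}c_1'$; $\mathtt{skip};c\to c$; conditional goes to branch $v=[\![be]\!]_\rho$ observing $\mathrm{branch}(v)$; $\mathtt{while}\ be\ \mathtt{do}\ c\to\mathtt{if}\ be\ \mathtt{then}\ (c;\mathtt{while}\ be\ \mathtt{do}\ c)\ \mathtt{else}\ \mathtt{skip}$; $X\leftarrow a[ie]$ with $i=[\![ie]\!]_\rho<|a|_\mu$ sets $X:=\mu(a)[i]$ observing $\mathrm{read}(a,i)$; $a[ie]\leftarrow e$ with $i<|a|_\mu$ sets $\mu[a[i]\mapsto[\![e]\!]_\rho]$ observing $\mathrm{write}(a,i)$. $\langle c_1,\rho_1,\mu_1\rangle\approx\langle c_2,\rho_2,\mu_2\rangle$ iff for all multi-step executions $\langle c_k,\rho_k,\mu_k\rangle\xrightarrow{O_k}{}^*$ (any prefix), one of $O_1,O_2$ is a prefix of the other. Speculative semantics: configurations $\langle c,\rho,\mu,\beta\rangle$; non-observing rules as sequentially (flag kept, no directive). Conditional: with directive $\mathit{step}$ as sequentially; with $\mathit{force}$ go to branch $\neg[\![be]\!]_\rho$ and set $\beta:=\mathtt{true}$; obs $\mathrm{branch}([\![be]\!]_\rho)$. Reads/writes with $\mathit{step}$ as sequentially. Read with $\mathrm{load}(a',j)$: requires $\beta=\mathtt{true}$, $i=[\![ie]\!]_\rho\ge|a|_\mu$, $j<|a'|_\mu$, sets $X:=\mu(a')[j]$, obs $\mathrm{read}(a,i)$.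 Write with $\mathrm{store}(a',j)$: requires $\beta=\mathtt{true}$, $i\ge|a|_\mu$, $j<|a'|_\mu$, sets $\mu[a'[j]\mapsto[\![e]\!]_\rho]$, obs $\mathrm{write}(a,i)$. $\langle c_1,\rho_1,\mu_1,\beta_1\rangle\approx_s\langle c_2,\rho_2,\mu_2,\beta_2\rangle$ iff for all $D,O_1,O_2$, whenever both multi-step with the same directive list $D$ producing $O_1,O_2$, $O_1=O_2$. Labels: $\mathtt{true}$=public, $\mathtt{false}$=secret; $\ell_1\sqsubseteq\ell_2$ iff $\ell_2=\mathtt{true}\Rightarrow\ell_1=\mathtt{true}$; $\ell_1\sqcup\ell_2=\ell_1\wedge\ell_2$, lifted pointwise to labelings. $P(e),P(be)$ public iff all variables occurring are public. $\rho_1\sim_P\rho_2$: agreement on public scalar variables; $\mu_1\sim_{PA}\mu_2$: agreement on sizes and contents of public arrays. Annotated commands: $\hat c::=\mathtt{skip}\mid X:=e\mid \hat c_1;_{P,PA}\hat c_2\mid\mathtt{if}_\ell\ be\ \mathtt{then}\ \hat c_1\ \mathtt{else}\ \hat c_2\mid\mathtt{while}_{\ell,P,PA}\ be\ \mathtt{do}\ \hat c\mid X\leftarrow_{\ell_X,\ell_i}a[e]\mid a[e]\leftarrow_{\ell_i}e'$. Flow-sensitive IFC analysis $\mathcal F(c,P,PA,pc)=(\hat c,P',PA')$: $\mathtt{skip}\mapsto(\mathtt{skip},P,PA)$; $X:=e\mapsto(X:=e,P[X\mapsto P(e)],PA)$; $c_1;c_2\mapsto(\hat c_1;_{P_1,PA_1}\hat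 c_2,P_2,PA_2)$ where $(\hat c_1,P_1,PA_1)=\mathcal F(c_1,P,PA,pc)$, $(\hat c_2,P_2,PA_2)=\mathcal F(c_2,P_1,PA_1,pc)$; $\mathtt{if}\ be\ \mathtt{then}\ c_1\ \mathtt{else}\ c_2\mapsto(\mathtt{if}_{P(be)}\ be\ \mathtt{then}\ \hat c_1\ \mathtt{else}\ \hat c_2,P_1\sqcup P_2,PA_1\sqcup PA_2)$ where $(\hat c_k,P_k,PA_k)=\mathcal F(c_k,P,PA,pc\sqcup P(be))$; $\mathtt{while}\ be\ \mathtt{do}\ c\mapsto(\mathtt{while}_{P_f(be),P_f,PA_f}\ be\ \mathtt{do}\ \hat c,P_f,PA_f)$ where $\hat c$ is the first component of $\mathcal F(c,P_f,PA_f,pc\sqcup P_f(be))$ and $(P_f,PA_f)$ is a fixpoint of $G(P'',PA'')=(P''',PA''')\sqcup(P,PA)$, with $(\_,P''',PA''')=\mathcal F(c,P'',PA'',pc\sqcup P''(be))$, obtained by iterating $G$ from $(P,PA)$ (bounded by the number of variables and arrays assigned in $c$); $X\leftarrow a[i]\mapsto(X\leftarrow_{\ell,P(i)}a[i],P[X\mapsto\ell],PA)$ with $\ell=pc\sqcup P(i)\sqcup PA(a)$; $a[i]\leftarrow e\mapsto(a[i]\leftarrow_{P(i)}e,P,PA[a\mapsto PA(a)\sqcup pc\sqcup P(i)\sqcup P(e)])$. Translation $T$ (FS-FvSLH) of annotated commands: with $m(i)=(\mathtt b==1)\,?\,0:i$ and $B_\ell(be)=be$ if $\ell=\mathtt{true}$,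 $B_\ell(be)=(\mathtt b==0\ \&\&\ be)$ if $\ell=\mathtt{false}$: $\mathtt{skip}$, $X:=e$ unchanged; $\hat c_1;_{P,PA}\hat c_2\mapsto T(\hat c_1);T(\hat c_2)$; $\mathtt{if}_\ell\ be\ \mathtt{then}\ \hat c_1\ \mathtt{else}\ \hat c_2\mapsto\mathtt{if}\ B_\ell(be)\ \mathtt{then}\ (\mathtt b:=B_\ell(be)\,?\,\mathtt b:1;T(\hat c_1))\ \mathtt{else}\ (\mathtt b:=B_\ell(be)\,?\,1:\mathtt b;T(\hat c_2))$; $\mathtt{while}_{\ell,P,PA}\ be\ \mathtt{do}\ \hat c\mapsto(\mathtt{while}\ B_\ell(be)\ \mathtt{do}\ (\mathtt b:=B_\ell(be)\,?\,\mathtt b:1;T(\hat c)));\ \mathtt b:=B_\ell(be)\,?\,1:\mathtt b$; $X\leftarrow_{\ell_X,\ell_i}a[i]\mapsto(X\leftarrow a[i];X:=(\mathtt b==1)\,?\,0:X)$ if $\ell_X=\ell_i=\mathtt{true}$, $X\leftarrow a[i]$ if $\ell_X=\mathtt{false},\ell_i=\mathtt{true}$, and $X\leftarrow a[m(i)]$ if $\ell_i=\mathtt{false}$; $a[i]\leftarrow_{\ell_i}e\mapsto a[i]\leftarrow e$ if $\ell_i=\mathtt{true}$ and $a[m(i)]\leftarrow e$ if $\ell_i=\mathtt{false}$. *)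

(* Defs.v *)
From Stdlib Require Import String List Arith Bool.
Import ListNotations.


Definition total_map (A : Type) := string -> A.
Definition t_update {A : Type} (m : total_map A) (x : string) (v : A) : total_map A :=
  fun y => if String.eqb x y then v else m y.

(* op_N / op_B / cmp are arbitrary (binary) operators given by their semantics. *)
Inductive aexp : Type :=
  | ANum (n : nat)
  | AVar (x : string)
  | AOp (f : nat -> nat -> nat) (e1 e2 : aexp)
  | ACond (be : bexp) (e1 e2 : aexp)
with bexp : Type :=
  | BTrue
  | BFalse
  | BCmp (f : nat -> nat -> bool) (e1 e2 : aexp)
  | BOp (f : bool -> bool -> bool) (b1 b2 : bexp).

Inductive com : Type :=
  | Skip
  | Asgn (x : string) (e : aexp)
  | Seq (c1 c2 : com)
  | If (be : bexp) (c1 c2 : com)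
  | While (be : bexp) (c : com)
  | ARead (x : string) (a : string) (i : aexp)
  | AWrite (a : string) (i : aexp) (e : aexp).

Definition state := total_map nat.
Definition mem := total_map (list nat).     (* array state mu; |a| = length (mu a) *)

Fixpoint aeval (rho : state) (e : aexp) : nat :=
  match e with
  | ANum n => n
  | AVar x => rho x
  | AOp f e1 e2 => f (aeval rho e1) (aeval rho e2)
  | ACond be e1 e2 => if beval rho be then aeval rho e1 else aeval rho e2
  end
with beval (rho : state) (be : bexp) : bool :=
  match be with
  | BTrue => true
  | BFalse => false
  | BCmp f e1 e2 => f (aeval rho e1) (aeval rho e2)
  | BOp f b1 b2 => f (beval rho b1) (beval rho b2)
  end.

Fixpoint upd (l : list nat) (i v : nat) : list nat :=
  match l, i with
  | [], _ => []
  | _ :: t, 0 => v :: t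
  | h :: t, S i' => h :: upd t i' v
  end.

Fixpoint avars (e : aexp) : list string :=
  match e with
  | ANum _ => []
  | AVar x => [x]
  | AOp _ e1 e2 => avars e1 ++ avars e2
  | ACond be e1 e2 => bvars be ++ avars e1 ++ avars e2
  end
with bvars (be : bexp) : list string :=
  match be with
  | BTrue | BFalse => []
  | BCmp _ e1 e2 => avars e1 ++ avars e2
  | BOp _ b1 b2 => bvars b1 ++ bvars b2
  end.

Fixpoint used_vars (c : com) : list string :=
  match c with
  | Skip => []
  | Asgn x e => x :: avars e
  | Seq c1 c2 => used_vars c1 ++ used_vars c2
  | If be c1 c2 => bvars be ++ used_vars c1 ++ used_vars c2
  | While be c => bvars be ++ used_vars c
  | ARead x a i => x :: avars i
  | AWrite a i e => avars i ++ avars e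
  end.

(* the reserved misspeculation-flag variable *)
Definition bvar : string := "b"%string.

Inductive observation : Type :=
  | OBranch (v : bool)
  | ORead (a : string) (i : nat)
  | OWrite (a : string) (i : nat).

Inductive direction : Type :=
  | DStep
  | DForce
  | DLoad (a : string) (j : nat)
  | DStore (a : string) (j : nat).

Inductive seq_eval_small_step :
  com -> state -> mem -> com -> state -> mem -> list observation -> Prop :=
  | SSM_Asgn : forall x e rho mu,
      seq_eval_small_step (Asgn x e) rho mu Skip (t_update rho x (aeval rho e)) mu []
  | SSM_Seq : forall c1 rho mu c1' rho' mu' os c2,
      seq_eval_small_step c1 rho mu c1' rho' mu' os ->
      seq_eval_small_step (Seq c1 c2) rho mu (Seq c1' c2) rho' mu' os
  | SSM_Seq_Skip : forall c rho mu,
      seq_eval_small_step (Seq Skip c) rho mu c rho mu []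
  | SSM_If : forall be c1 c2 rho mu,
      seq_eval_small_step (If be c1 c2) rho mu
        (if beval rho be then c1 else c2) rho mu [OBranch (beval rho be)]
  | SSM_While : forall be c rho mu,
      seq_eval_small_step (While be c) rho mu
        (If be (Seq c (While be c)) Skip) rho mu []
  | SSM_ARead : forall x a ie rho mu i,
      aeval rho ie = i -> i < length (mu a) ->
      seq_eval_small_step (ARead x a ie) rho mu
        Skip (t_update rho x (nth i (mu a) 0)) mu [ORead a i]
  | SSM_AWrite : forall a ie e rho mu i n,
      aeval rho e = n -> aeval rho ie = i -> i < length (mu a) ->
      seq_eval_small_step (AWrite a ie e) rho mu
        Skip rho (t_update mu a (upd (mu a) i n)) [OWrite a i].

Inductive multi_seq : com -> state -> mem -> com -> state -> mem -> list observation -> Prop :=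
  | multi_seq_refl : forall c rho mu, multi_seq c rho mu c rho mu []
  | multi_seq_trans : forall c1 rho1 mu1 c2 rho2 mu2 c3 rho3 mu3 os1 os2,
      seq_eval_small_step c1 rho1 mu1 c2 rho2 mu2 os1 ->
      multi_seq c2 rho2 mu2 c3 rho3 mu3 os2 ->
      multi_seq c1 rho1 mu1 c3 rho3 mu3 (os1 ++ os2).

Definition prefix {X : Type} (l1 l2 : list X) : Prop := exists l, l2 = (l1 ++ l)%list.

Definition seq_same_obs (c1 : com) (rho1 : state) (mu1 : mem)
                        (c2 : com) (rho2 : state) (mu2 : mem) : Prop :=
  forall c1' rho1' mu1' c2' rho2' mu2' os1 os2,
    multi_seq c1 rho1 mu1 c1' rho1' mu1' os1 ->
    multi_seq c2 rho2 mu2 c2' rho2' mu2' os2 ->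
    prefix os1 os2 \/ prefix os2 os1.

Inductive spec_eval_small_step :
  com -> state -> mem -> bool -> com -> state -> mem -> bool ->
  list direction -> list observation -> Prop :=
  | Spec_Asgn : forall x e rho mu bt,
      spec_eval_small_step (Asgn x e) rho mu bt Skip (t_update rho x (aeval rho e)) mu bt [] []
  | Spec_Seq : forall c1 rho mu bt c1' rho' mu' bt' ds os c2,
      spec_eval_small_step c1 rho mu bt c1' rho' mu' bt' ds os ->
      spec_eval_small_step (Seq c1 c2) rho mu bt (Seq c1' c2) rho' mu' bt' ds os
  | Spec_Seq_Skip : forall c rho mu bt,
      spec_eval_small_step (Seq Skip c) rho mu bt c rho mu bt [] []
  | Spec_If : forall be c1 c2 rho mu bt,
      spec_eval_small_step (If be c1 c2) rho mu bt
        (if beval rho be then c1 else c2) rho mu bt [DStep] [OBranch (beval rho be)]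
  | Spec_If_F : forall be c1 c2 rho mu bt,
      spec_eval_small_step (If be c1 c2) rho mu bt
        (if beval rho be then c2 else c1) rho mu true [DForce] [OBranch (beval rho be)]
  | Spec_While : forall be c rho mu bt,
      spec_eval_small_step (While be c) rho mu bt
        (If be (Seq c (While be c)) Skip) rho mu bt [] []
  | Spec_ARead : forall x a ie rho mu bt i,
      aeval rho ie = i -> i < length (mu a) ->
      spec_eval_small_step (ARead x a ie) rho mu bt
        Skip (t_update rho x (nth i (mu a) 0)) mu bt [DStep] [ORead a i]
  | Spec_ARead_U : forall x a ie rho mu i a' j,
      aeval rho ie = i -> i >= length (mu a) -> j < length (mu a') ->
      spec_eval_small_step (ARead x a ie) rho mu true
        Skip (t_update rho x (nth j (mu a') 0)) mu true [DLoad a' j] [ORead a i]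
  | Spec_AWrite : forall a ie e rho mu bt i n,
      aeval rho e = n -> aeval rho ie = i -> i < length (mu a) ->
      spec_eval_small_step (AWrite a ie e) rho mu bt
        Skip rho (t_update mu a (upd (mu a) i n)) bt [DStep] [OWrite a i]
  | Spec_AWrite_U : forall a ie e rho mu i n a' j,
      aeval rho e = n -> aeval rho ie = i -> i >= length (mu a) -> j < length (mu a') ->
      spec_eval_small_step (AWrite a ie e) rho mu true
        Skip rho (t_update mu a' (upd (mu a') j n)) true [DStore a' j] [OWrite a i].

Inductive multi_spec :
  com -> state -> mem -> bool -> com -> state -> mem -> bool ->
  list direction -> list observation -> Prop :=
  | multi_spec_refl : forall c rho mu bt, multi_spec c rho mu bt c rho mu bt [] []
  | multi_spec_trans : forall c1 rho1 mu1 bt1 c2 rho2 mu2 bt2 c3 rho3 mu3 bt3 ds1 ds2 os1 os2,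
      spec_eval_small_step c1 rho1 mu1 bt1 c2 rho2 mu2 bt2 ds1 os1 ->
      multi_spec c2 rho2 mu2 bt2 c3 rho3 mu3 bt3 ds2 os2 ->
      multi_spec c1 rho1 mu1 bt1 c3 rho3 mu3 bt3 (ds1 ++ ds2) (os1 ++ os2).

Definition spec_same_obs (c1 : com) (rho1 : state) (mu1 : mem) (bt1 : bool)
                         (c2 : com) (rho2 : state) (mu2 : mem) (bt2 : bool) : Prop :=
  forall ds c1' rho1' mu1' bt1' c2' rho2' mu2' bt2' os1 os2,
    multi_spec c1 rho1 mu1 bt1 c1' rho1' mu1' bt1' ds os1 ->
    multi_spec c2 rho2 mu2 bt2 c2' rho2' mu2' bt2' ds os2 ->
    os1 = os2.

(* true = public, false = secret; join = conjunction *)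
Definition label := bool.
Definition join (l1 l2 : label) : label := l1 && l2.
Definition pub_vars := total_map label.
Definition pub_arrs := total_map label.
Definition join_pub (P1 P2 : total_map label) : total_map label :=
  fun x => join (P1 x) (P2 x).

Definition label_of_aexp (P : pub_vars) (e : aexp) : label :=
  forallb P (avars e).
Definition label_of_bexp (P : pub_vars) (be : bexp) : label :=
  forallb P (bvars be).

Definition pub_equiv (P : total_map label) {X : Type} (s1 s2 : total_map X) : Prop :=
  forall x, P x = true -> s1 x = s2 x.

Inductive acom : Type :=
  | ASkip
  | AAsgn (x : string) (e : aexp)
  | ASeq (c1 : acom) (P : pub_vars) (PA : pub_arrs) (c2 : acom)
  | AIf (l : label) (be : bexp) (c1 c2 : acom)
  | AWhile (l : label) (P : pub_vars) (PA : pub_arrs) (be : bexp) (c : acom)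
  | AARead (x : string) (lx li : label) (a : string) (i : aexp)
  | AAWrite (a : string) (i : aexp) (li : label) (e : aexp).

(* number of assignment targets in c (with repetitions): an upper bound on the
   number of variables and arrays assigned in c *)
Fixpoint assigned_count (c : com) : nat :=
  match c with
  | Skip => 0
  | Asgn _ _ => 1
  | Seq c1 c2 => assigned_count c1 + assigned_count c2
  | If _ c1 c2 => assigned_count c1 + assigned_count c2
  | While _ c => assigned_count c
  | ARead _ _ _ => 1
  | AWrite _ _ _ => 1
  end.

(* flow-sensitive IFC analysis F(c,P,PA,pc) = (ĉ, P', PA') *)
Fixpoint static_tracking (c : com) (P : pub_vars) (PA : pub_arrs) (pc : label)
  : acom * pub_vars * pub_arrs :=
  match c with
  | Skip => (ASkip, P, PA)
  | Asgn x e => (AAsgn x e, t_update P x (label_of_aexp P e), PA)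
  | Seq c1 c2 =>
      let '(ac1, P1, PA1) := static_tracking c1 P PA pc in
      let '(ac2, P2, PA2) := static_tracking c2 P1 PA1 pc in
      (ASeq ac1 P1 PA1 ac2, P2, PA2)
  | If be c1 c2 =>
      let l := label_of_bexp P be in
      let '(ac1, P1, PA1) := static_tracking c1 P PA (join pc l) in
      let '(ac2, P2, PA2) := static_tracking c2 P PA (join pc l) in
      (AIf l be ac1 ac2, join_pub P1 P2, join_pub PA1 PA2)
  | While be c1 =>
      let G := fun (st : pub_vars * pub_arrs) =>
        let '(P'', PA'') := st in
        let '(_, P3, PA3) := static_tracking c1 P'' PA'' (join pc (label_of_bexp P'' be)) in
        (join_pub P3 P, join_pub PA3 PA) in
      let '(Pf, PAf) := Nat.iter (assigned_count c1) G (P, PA) in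
      let '(ac1, _, _) := static_tracking c1 Pf PAf (join pc (label_of_bexp Pf be)) in
      (AWhile (label_of_bexp Pf be) Pf PAf be ac1, Pf, PAf)
  | ARead x a i =>
      let l := join pc (join (label_of_aexp P i) (PA a)) in
      (AARead x l (label_of_aexp P i) a i, t_update P x l, PA)
  | AWrite a i e =>
      (AAWrite a i (label_of_aexp P i) e, P,
       t_update PA a (join (PA a) (join pc (join (label_of_aexp P i) (label_of_aexp P e)))))
  end.

Definition bEq (n : nat) : bexp := BCmp Nat.eqb (AVar bvar) (ANum n).
Definition mask_index (i : aexp) : aexp := ACond (bEq 1) (ANum 0) i.
Definition B_of (l : label) (be : bexp) : bexp :=
  if l then be else BOp andb (bEq 0) be.

Fixpoint fs_flex_slh (c : acom) : com :=
  match c with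
  | ASkip => Skip
  | AAsgn x e => Asgn x e
  | ASeq c1 _ _ c2 => Seq (fs_flex_slh c1) (fs_flex_slh c2)
  | AIf l be c1 c2 =>
      If (B_of l be)
         (Seq (Asgn bvar (ACond (B_of l be) (AVar bvar) (ANum 1))) (fs_flex_slh c1))
         (Seq (Asgn bvar (ACond (B_of l be) (ANum 1) (AVar bvar))) (fs_flex_slh c2))
  | AWhile l _ _ be c1 =>
      Seq (While (B_of l be)
             (Seq (Asgn bvar (ACond (B_of l be) (AVar bvar) (ANum 1))) (fs_flex_slh c1)))
          (Asgn bvar (ACond (B_of l be) (ANum 1) (AVar bvar)))
  | AARead x lx li a i =>
      if li then
        (if lx then Seq (ARead x a i) (Asgn x (ACond (bEq 1) (ANum 0) (AVar x)))
         else ARead x a i)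
      else ARead x a (mask_index i)
  | AAWrite a i li e =>
      if li then AWrite a i e else AWrite a (mask_index i) e
  end.

(* Main.v *)
Require Import Defs.
From Stdlib Require Import String List Arith Bool Lia.
From Stdlib Require Import Classical FunctionalExtensionality.
Import ListNotations.

Definition le (P Q : total_map label) : Prop := forall x, P x = true -> Q x = true.

Lemma le_refl : forall P, le P P. Proof. unfold le; auto. Qed.
Lemma le_trans : forall P Q S, le P Q -> le Q S -> le P S. Proof. unfold le; auto. Qed.

Lemma t_update_eq : forall {A} (m : total_map A) x v, t_update m x v x = v.
Proof. intros. unfold t_update. rewrite String.eqb_refl. auto. Qed.
Lemma t_update_neq : forall {A} (m : total_map A) x y v, x <> y -> t_update m x v y = m y.
Proof. intros. unfold t_update. apply String.eqb_neq in H. rewrite H. auto. Qed.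

Scheme aexp_mind := Induction for aexp Sort Prop with bexp_mind := Induction for bexp Sort Prop.

Lemma eval_agree : forall r1 r2,
  (forall e, (forall x, In x (avars e) -> r1 x = r2 x) -> aeval r1 e = aeval r2 e) /\
  (forall b, (forall x, In x (bvars b) -> r1 x = r2 x) -> beval r1 b = beval r2 b).
Proof.
  intros r1 r2.
  assert (A : forall x (l1 l2 : list string), In x l1 -> In x (l1 ++ l2)) by (intros; apply in_or_app; auto).
  assert (B : forall x (l1 l2 : list string), In x l2 -> In x (l1 ++ l2)) by (intros; apply in_or_app; auto).
  split;
  [apply (aexp_mind (fun e => (forall x, In x (avars e) -> r1 x = r2 x) -> aeval r1 e = aeval r2 e)
                    (fun b => (forall x, In x (bvars b) -> r1 x = r2 x) -> beval r1 b = beval r2 b))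
  |apply (bexp_mind (fun e => (forall x, In x (avars e) -> r1 x = r2 x) -> aeval r1 e = aeval r2 e)
                    (fun b => (forall x, In x (bvars b) -> r1 x = r2 x) -> beval r1 b = beval r2 b))];
  simpl; intros; auto.
  all: try (rewrite H, H0; auto; fail).
  all: try (rewrite H, H0, H1; auto; fail).
Qed.

Lemma label_a : forall P e r1 r2, label_of_aexp P e = true -> pub_equiv P r1 r2 -> aeval r1 e = aeval r2 e.
Proof.
  intros. apply eval_agree. intros. unfold label_of_aexp in H. rewrite forallb_forall in H. auto.
Qed.
Lemma label_b : forall P e r1 r2, label_of_bexp P e = true -> pub_equiv P r1 r2 -> beval r1 e = beval r2 e.
Proof.
  intros. apply eval_agree. intros. unfold label_of_bexp in H. rewrite forallb_forall in H. auto.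
Qed.
Lemma label_a_mono : forall P Q e, le P Q -> label_of_aexp P e = true -> label_of_aexp Q e = true.
Proof. unfold label_of_aexp; intros. rewrite forallb_forall in *. auto. Qed.
Lemma label_b_mono : forall P Q e, le P Q -> label_of_bexp P e = true -> label_of_bexp Q e = true.
Proof. unfold label_of_bexp; intros. rewrite forallb_forall in *. auto. Qed.

Lemma pe_le : forall {X} P Q (s1 s2 : total_map X), le Q P -> pub_equiv P s1 s2 -> pub_equiv Q s1 s2.
Proof. unfold pub_equiv, le; auto. Qed.
Fixpoint avs (c : com) : list string :=
  match c with
  | Asgn x _ => [x]
  | Seq c1 c2 => avs c1 ++ avs c2
  | If _ c1 c2 => avs c1 ++ avs c2
  | While _ c => avs c
  | ARead x _ _ => [x]
  | _ => []
  end.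
Fixpoint aas (c : com) : list string :=
  match c with
  | AWrite a _ _ => [a]
  | Seq c1 c2 => aas c1 ++ aas c2
  | If _ c1 c2 => aas c1 ++ aas c2
  | While _ c => aas c
  | _ => []
  end.
Lemma assigned_len : forall c, length (avs c) + length (aas c) = assigned_count c.
Proof. induction c; simpl; rewrite ?length_app; lia. Qed.

Definition Gf (c1 : com) (be : bexp) (pc : label) (P : pub_vars) (PA : pub_arrs)
  : pub_vars * pub_arrs -> pub_vars * pub_arrs :=
  fun st => let '(P'', PA'') := st in
   let '(_, P3, PA3) := static_tracking c1 P'' PA'' (join pc (label_of_bexp P'' be)) in
   (join_pub P3 P, join_pub PA3 PA).

Lemma st_while : forall be c1 P PA pc, static_tracking (While be c1) P PA pc =
  let '(Pf, PAf) := Nat.iter (assigned_count c1) (Gf c1 be pc P PA) (P, PA) in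
  let '(ac1, _, _) := static_tracking c1 Pf PAf (join pc (label_of_bexp Pf be)) in
  (AWhile (label_of_bexp Pf be) Pf PAf be ac1, Pf, PAf).
Proof. reflexivity. Qed.

Definition le2 (x y : pub_vars * pub_arrs) := le (fst x) (fst y) /\ le (snd x) (snd y).

Lemma iter_mono : forall (G1 G2 : pub_vars * pub_arrs -> pub_vars * pub_arrs) x1 x2,
  (forall a b, le2 a b -> le2 (G1 a) (G2 b)) -> le2 x1 x2 ->
  forall n, le2 (Nat.iter n G1 x1) (Nat.iter n G2 x2).
Proof. induction n; simpl; auto. Qed.

Lemma join_le1 : forall P Q, le (join_pub P Q) P.
Proof. unfold le, join_pub, join; intros. apply andb_prop in H. tauto. Qed.
Lemma join_le2 : forall P Q, le (join_pub P Q) Q.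
Proof. unfold le, join_pub, join; intros. apply andb_prop in H. tauto. Qed.
Lemma join_mono : forall P1 P2 Q1 Q2, le P1 P2 -> le Q1 Q2 -> le (join_pub P1 Q1) (join_pub P2 Q2).
Proof. unfold le, join_pub, join; intros. apply andb_prop in H1. destruct H1. rewrite H, H0; auto. Qed.
Lemma le_upd : forall P Q x (a b : bool), le P Q -> (a = true -> b = true) -> le (t_update P x a) (t_update Q x b).
Proof. unfold le, t_update; intros. destruct (String.eqb x x0); auto. Qed.

Lemma F_mono : forall c P1 PA1 pc1 P2 PA2 pc2 ac1 P1' PA1' ac2 P2' PA2',
  le P1 P2 -> le PA1 PA2 -> (pc1 = true -> pc2 = true) ->
  static_tracking c P1 PA1 pc1 = (ac1, P1', PA1') ->
  static_tracking c P2 PA2 pc2 = (ac2, P2', PA2') -> le P1' P2' /\ le PA1' PA2'.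
Proof.
  induction c; intros P1 PA1 pc1 P2 PA2 pc2 ac1 P1' PA1' ac2 P2' PA2' HP HPA Hpc E1 E2.
  - simpl in *. inversion E1; inversion E2; subst; auto.
  - simpl in *. inversion E1; inversion E2; subst. split; auto.
    apply le_upd; auto. intros; eapply label_a_mono; eauto.
  - simpl in E1, E2.
    destruct (static_tracking c1 P1 PA1 pc1) as [[a1 Q1] QA1] eqn:F1.
    destruct (static_tracking c2 Q1 QA1 pc1) as [[b1 R1] RA1] eqn:F2.
    destruct (static_tracking c1 P2 PA2 pc2) as [[a2 Q2] QA2] eqn:F3.
    destruct (static_tracking c2 Q2 QA2 pc2) as [[b2 R2] RA2] eqn:F4.
    inversion E1; inversion E2; subst.
    destruct (IHc1 _ _ _ _ _ _ _ _ _ _ _ _ HP HPA Hpc F1 F3).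
    eapply IHc2; [ | | | exact F2 | exact F4]; eauto.
  - simpl in E1, E2.
    assert (Hpc' : join pc1 (label_of_bexp P1 be) = true -> join pc2 (label_of_bexp P2 be) = true).
    { unfold join; intros H; apply andb_prop in H; destruct H. rewrite Hpc; auto. simpl. eapply label_b_mono; eauto. }
    destruct (static_tracking c1 P1 PA1 _) as [[a1 Q1] QA1] eqn:F1.
    destruct (static_tracking c2 P1 PA1 _) as [[b1 R1] RA1] eqn:F2.
    destruct (static_tracking c1 P2 PA2 _) as [[a2 Q2] QA2] eqn:F3.
    destruct (static_tracking c2 P2 PA2 _) as [[b2 R2] RA2] eqn:F4.
    inversion E1; inversion E2; subst.
    destruct (IHc1 _ _ _ _ _ _ _ _ _ _ _ _ HP HPA Hpc' F1 F3).
    destruct (IHc2 _ _ _ _ _ _ _ _ _ _ _ _ HP HPA Hpc' F2 F4).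
    split; apply join_mono; auto.
  - rewrite st_while in E1, E2.
    assert (Hit : le2 (Nat.iter (assigned_count c) (Gf c be pc1 P1 PA1) (P1, PA1))
                      (Nat.iter (assigned_count c) (Gf c be pc2 P2 PA2) (P2, PA2))).
    { apply iter_mono; [ | split; auto].
      intros [x1 y1] [x2 y2] [Hx Hy]. simpl in Hx, Hy. unfold Gf.
      destruct (static_tracking c x1 y1 _) as [[a1 Q1] QA1] eqn:F1.
      destruct (static_tracking c x2 y2 _) as [[a2 Q2] QA2] eqn:F2.
      assert (Hpc' : join pc1 (label_of_bexp x1 be) = true -> join pc2 (label_of_bexp x2 be) = true).
      { unfold join; intros H; apply andb_prop in H; destruct H. rewrite Hpc; auto. simpl. eapply label_b_mono; eauto. }
      destruct (IHc _ _ _ _ _ _ _ _ _ _ _ _ Hx Hy Hpc' F1 F2).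
      split; simpl; apply join_mono; auto. }
    destruct (Nat.iter _ (Gf c be pc1 P1 PA1) _) as [Pf1 PAf1].
    destruct (Nat.iter _ (Gf c be pc2 P2 PA2) _) as [Pf2 PAf2].
    destruct (static_tracking c Pf1 PAf1 _) as [[a1 Q1] QA1].
    destruct (static_tracking c Pf2 PAf2 _) as [[a2 Q2] QA2].
    inversion E1; inversion E2; subst. exact Hit.
  - simpl in *. inversion E1; inversion E2; subst. split; auto.
    apply le_upd; auto. unfold join. intros H. apply andb_prop in H as [H H']. apply andb_prop in H' as [H' H''].
    rewrite Hpc; auto. simpl. rewrite (label_a_mono _ _ _ HP H'). simpl. auto.
  - simpl in *. inversion E1; inversion E2; subst. split; auto.
    apply le_upd; auto. unfold join. intros H.
    rewrite !andb_true_iff in H. destruct H as [Ha [Hp [Hi He]]].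
    rewrite HPA, Hpc, (label_a_mono _ _ _ HP Hi), (label_a_mono _ _ _ HP He); auto.
Qed.
Lemma G_frame_v : forall c be pc P PA x y, 
  (forall P0 PA0 pc0 ac P' PA', static_tracking c P0 PA0 pc0 = (ac, P', PA') -> forall y, ~ In y (avs c) -> P' y = P0 y) ->
  ~ In y (avs c) -> fst (Gf c be pc P PA x) y = fst x y && P y.
Proof.
  intros. destruct x as [x1 x2]. unfold Gf. destruct (static_tracking c x1 x2 _) as [[a Q] QA] eqn:E.
  simpl. unfold join_pub, join. erewrite H; eauto.
Qed.
Lemma G_frame_a : forall c be pc P PA x y, 
  (forall P0 PA0 pc0 ac P' PA', static_tracking c P0 PA0 pc0 = (ac, P', PA') -> forall y, ~ In y (aas c) -> PA' y = PA0 y) ->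
  ~ In y (aas c) -> snd (Gf c be pc P PA x) y = snd x y && PA y.
Proof.
  intros. destruct x as [x1 x2]. unfold Gf. destruct (static_tracking c x1 x2 _) as [[a Q] QA] eqn:E.
  simpl. unfold join_pub, join. erewrite H; eauto.
Qed.

Lemma iter_frame_v : forall (G : pub_vars * pub_arrs -> pub_vars * pub_arrs) x0 L,
  (forall a y, ~In y L -> fst (G a) y = fst a y && fst x0 y) ->
  forall n y, ~ In y L -> fst (Nat.iter n G x0) y = fst x0 y.
Proof. induction n; intros; simpl; auto. rewrite H, IHn; auto. apply andb_diag. Qed.
Lemma iter_frame_a : forall (G : pub_vars * pub_arrs -> pub_vars * pub_arrs) x0 L,
  (forall a y, ~In y L -> snd (G a) y = snd a y && snd x0 y) ->
  forall n y, ~ In y L -> snd (Nat.iter n G x0) y = snd x0 y.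
Proof. induction n; intros; simpl; auto. rewrite H, IHn; auto. apply andb_diag. Qed.

Lemma F_frame : forall c P PA pc ac P' PA', static_tracking c P PA pc = (ac, P', PA') ->
  (forall y, ~ In y (avs c) -> P' y = P y) /\ (forall y, ~ In y (aas c) -> PA' y = PA y).
Proof.
  induction c; intros P PA pc ac P' PA' E.
  - simpl in E; inversion E; subst; auto.
  - simpl in E; inversion E; subst; split; auto. intros. simpl in H. apply t_update_neq. intuition.
  - simpl in E.
    destruct (static_tracking c1 P PA pc) as [[a1 Q1] QA1] eqn:F1.
    destruct (static_tracking c2 Q1 QA1 pc) as [[b1 R1] RA1] eqn:F2.
    inversion E; subst. apply IHc1 in F1 as [A1 B1]. apply IHc2 in F2 as [A2 B2].
    simpl. split; intros; rewrite ?in_app_iff in H; [rewrite A2, A1 | rewrite B2, B1]; tauto.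
  - simpl in E.
    destruct (static_tracking c1 P PA _) as [[a1 Q1] QA1] eqn:F1.
    destruct (static_tracking c2 P PA _) as [[b1 R1] RA1] eqn:F2.
    inversion E; subst. apply IHc1 in F1 as [A1 B1]. apply IHc2 in F2 as [A2 B2].
    simpl. unfold join_pub, join. split; intros; rewrite ?in_app_iff in H; [rewrite A2, A1 | rewrite B2, B1]; try tauto; apply andb_diag.
  - rewrite st_while in E.
    pose proof (iter_frame_v (Gf c be pc P PA) (P, PA) (avs c)) as Hv.
    pose proof (iter_frame_a (Gf c be pc P PA) (P, PA) (aas c)) as Ha.
    destruct (Nat.iter _ (Gf c be pc P PA) _) as [Pf PAf] eqn:Ei.
    destruct (static_tracking c Pf PAf _) as [[a1 Q1] QA1].
    inversion E; subst. simpl. split; intros.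
    + specialize (Hv (fun a y H => G_frame_v c be pc P PA a y (fun P0 PA0 pc0 ac P' PA' E => proj1 (IHc _ _ _ _ _ _ E)) H) (assigned_count c) y H).
      rewrite Ei in Hv. exact Hv.
    + specialize (Ha (fun a y H => G_frame_a c be pc P PA a y (fun P0 PA0 pc0 ac P' PA' E => proj2 (IHc _ _ _ _ _ _ E)) H) (assigned_count c) y H).
      rewrite Ei in Ha. exact Ha.
  - simpl in E; inversion E; subst; split; auto. intros. simpl in H. apply t_update_neq. intuition.
  - simpl in E; inversion E; subst; split; auto. intros. simpl in H. apply t_update_neq. intuition.
Qed.

Lemma cnt_le : forall l (f g : string -> bool), le g f -> length (filter g l) <= length (filter f l).
Proof.
  induction l; simpl; intros; auto.
  destruct (g a) eqn:Eg; [rewrite (H _ Eg) | destruct (f a)]; simpl; specialize (IHl f g H); lia.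
Qed.
Lemma cnt_lt : forall l (f g : string -> bool), le g f -> forall z, In z l -> f z = true -> g z = false ->
  length (filter g l) < length (filter f l).
Proof.
  induction l; simpl; intros f g H z Hz Hf Hg; [contradiction|].
  destruct Hz as [<- | Hz].
  - rewrite Hf, Hg. simpl. pose proof (cnt_le l f g H). lia.
  - specialize (IHl f g H z Hz Hf Hg).
    destruct (g a) eqn:Eg; [rewrite (H _ Eg) | destruct (f a)]; simpl; lia.
Qed.
Lemma cnt0 : forall l (f : string -> bool), length (filter f l) = 0 -> forall z, In z l -> f z = false.
Proof.
  induction l; simpl; intros; [contradiction|].
  destruct (f a) eqn:Ea; simpl in H; [discriminate|]. destruct H0; subst; auto.
Qed.

Definition eq2 (x y : pub_vars * pub_arrs) := (forall z, fst x z = fst y z) /\ (forall z, snd x z = snd y z).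

Lemma le2_eq2 : forall a b, le2 a b -> le2 b a -> eq2 a b.
Proof.
  intros a b [A1 A2] [B1 B2]. split; intros z.
  - destruct (fst a z) eqn:E. symmetry; auto. destruct (fst b z) eqn:E2; auto. rewrite (B1 _ E2) in E; discriminate.
  - destruct (snd a z) eqn:E. symmetry; auto. destruct (snd b z) eqn:E2; auto. rewrite (B2 _ E2) in E; discriminate.
Qed.

Lemma fix_lemma : forall (G : pub_vars * pub_arrs -> pub_vars * pub_arrs) x0 (Lv La : list string),
  (forall a b, le2 a b -> le2 (G a) (G b)) ->
  (forall a, le2 (G a) x0) ->
  (forall a y, ~In y Lv -> fst (G a) y = fst a y && fst x0 y) ->
  (forall a y, ~In y La -> snd (G a) y = snd a y && snd x0 y) ->
  le2 (Nat.iter (length Lv + length La) G x0) x0 /\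
  le2 (Nat.iter (length Lv + length La) G x0) (G (Nat.iter (length Lv + length La) G x0)).
Proof.
  intros G x0 Lv La Hmono Hbel Hfv Hfa.
  set (x := fun n => Nat.iter n G x0).
  assert (Hdec : forall n, le2 (x (S n)) (x n)).
  { induction n. apply Hbel. apply Hmono. exact IHn. }
  assert (Hbelow : forall n, le2 (x n) x0).
  { induction n. split; apply le_refl. destruct (Hdec n), IHn. split; eapply le_trans; eauto. }
  set (cnt := fun p : pub_vars * pub_arrs => length (filter (fst p) Lv) + length (filter (snd p) La)).
  assert (H5 : forall n, eq2 (x (S n)) (x n) \/ cnt (x (S n)) < cnt (x n)).
  { intros n. destruct (classic (exists z, (In z Lv /\ fst (x n) z = true /\ fst (x (S n)) z = false) \/
                                           (In z La /\ snd (x n) z = true /\ snd (x (S n)) z = false))) as [[z Hz]|Hn].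
    - right. destruct (Hdec n) as [D1 D2]. unfold cnt.
      destruct Hz as [[A [B C]]|[A [B C]]].
      + pose proof (cnt_lt _ _ _ D1 z A B C). pose proof (cnt_le La _ _ D2). lia.
      + pose proof (cnt_lt _ _ _ D2 z A B C). pose proof (cnt_le Lv _ _ D1). lia.
    - left. destruct (Hdec n) as [D1 D2]. split; intros z.
      + destruct (fst (x (S n)) z) eqn:E1. symmetry; apply D1; auto.
        destruct (fst (x n) z) eqn:E2; auto.
        destruct (classic (In z Lv)). exfalso; apply Hn; eauto.
        simpl in E1, E2. change (fst (G (x n)) z = false) in E1. rewrite Hfv in E1 by auto.
        rewrite E2 in E1. simpl in E1. pose proof (Hbelow n) as [B1 _]. rewrite (B1 _ E2) in E1. discriminate.
      + destruct (snd (x (S n)) z) eqn:E1. symmetry; apply D2; auto.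
        destruct (snd (x n) z) eqn:E2; auto.
        destruct (classic (In z La)). exfalso; apply Hn; eauto.
        change (snd (G (x n)) z = false) in E1. rewrite Hfa in E1 by auto.
        rewrite E2 in E1. simpl in E1. pose proof (Hbelow n) as [_ B1]. rewrite (B1 _ E2) in E1. discriminate. }
  assert (H6 : forall n, eq2 (x (S n)) (x n) -> eq2 (x (S (S n))) (x (S n))).
  { intros n [E1 E2].
    assert (A : le2 (x (S n)) (x n)) by (split; intros z Hz; rewrite <- ?E1, <- ?E2; auto).
    assert (B : le2 (x n) (x (S n))) by (split; intros z Hz; rewrite ?E1, ?E2; auto).
    apply Hmono in A. apply Hmono in B.
    change (x (S (S n))) with (G (x (S n))). change (x (S n)) with (G (x n)) at 2.
    apply le2_eq2; auto. }
  assert (H7 : forall n, (exists m, m <= n /\ eq2 (x (S m)) (x m)) \/ cnt (x n) + n <= cnt x0).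
  { induction n. right. simpl. lia.
    destruct IHn as [[m [Hm E]]|IH]. left; exists m; split; auto.
    destruct (H5 n). left; exists n; auto. right. lia. }
  assert (H8 : forall m n, m <= n -> eq2 (x (S m)) (x m) -> eq2 (x (S n)) (x n)).
  { intros m n Hmn. induction Hmn; auto. }
  set (K := length Lv + length La).
  assert (EK : eq2 (x (S K)) (x K)).
  { destruct (H7 K) as [[m [Hm E]]|Hc]. eapply H8; eauto.
    assert (Hc0 : cnt x0 <= K) by (unfold cnt, K; pose proof (filter_length_le (fst x0) Lv); pose proof (filter_length_le (snd x0) La); simpl; lia).
    assert (Z : cnt (x K) = 0) by lia. unfold cnt in Z.
    assert (Zv : length (filter (fst (x K)) Lv) = 0) by lia.
    assert (Za : length (filter (snd (x K)) La) = 0) by lia.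
    destruct (Hdec K) as [D1 D2].
    split; intros z.
    - destruct (classic (In z Lv)).
      + pose proof (cnt0 _ _ Zv z H). rewrite H0. destruct (fst (x (S K)) z) eqn:Q; auto. rewrite (D1 _ Q) in H0; discriminate.
      + change (fst (G (x K)) z = fst (x K) z). rewrite Hfv by auto. unfold x. rewrite (iter_frame_v G x0 Lv Hfv K z H). apply andb_diag.
    - destruct (classic (In z La)).
      + pose proof (cnt0 _ _ Za z H). rewrite H0. destruct (snd (x (S K)) z) eqn:Q; auto. rewrite (D2 _ Q) in H0; discriminate.
      + change (snd (G (x K)) z = snd (x K) z). rewrite Hfa by auto. unfold x. rewrite (iter_frame_a G x0 La Hfa K z H). apply andb_diag. }
  split. apply Hbelow.
  destruct EK as [E1 E2]. split; intros z Hz; change (G (Nat.iter K G x0)) with (x (S K)); rewrite ?E1, ?E2; auto.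
Qed.
Lemma G_mono : forall c be pc P PA a b, le2 a b -> le2 (Gf c be pc P PA a) (Gf c be pc P PA b).
Proof.
  intros c be pc P PA [x1 y1] [x2 y2] [Hx Hy]. simpl in Hx, Hy. unfold Gf.
  destruct (static_tracking c x1 y1 _) as [[a1 Q1] QA1] eqn:F1.
  destruct (static_tracking c x2 y2 _) as [[a2 Q2] QA2] eqn:F2.
  assert (Hpc' : join pc (label_of_bexp x1 be) = true -> join pc (label_of_bexp x2 be) = true).
  { unfold join; intros H; apply andb_prop in H; destruct H. rewrite H. simpl. eapply label_b_mono; eauto. }
  destruct (F_mono _ _ _ _ _ _ _ _ _ _ _ _ _ Hx Hy Hpc' F1 F2).
  split; simpl; apply join_mono; auto; apply le_refl.
Qed.

Lemma G_below : forall c be pc P PA a, le2 (Gf c be pc P PA a) (P, PA).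
Proof.
  intros c be pc P PA [x1 y1]. unfold Gf.
  destruct (static_tracking c x1 y1 _) as [[a1 Q1] QA1]. split; apply join_le2.
Qed.

Lemma while_fix : forall c be pc P PA Pf PAf,
  Nat.iter (assigned_count c) (Gf c be pc P PA) (P, PA) = (Pf, PAf) ->
  le Pf P /\ le PAf PA /\
  forall ac1 Q1 QA1, static_tracking c Pf PAf (join pc (label_of_bexp Pf be)) = (ac1, Q1, QA1) ->
    le Pf Q1 /\ le PAf QA1.
Proof.
  intros c be pc P PA Pf PAf Ei.
  pose proof (fix_lemma (Gf c be pc P PA) (P, PA) (avs c) (aas c) (G_mono c be pc P PA) (G_below c be pc P PA)
     (fun a y H => G_frame_v c be pc P PA a y (fun P0 PA0 pc0 ac P' PA' E => proj1 (F_frame _ _ _ _ _ _ _ E)) H)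
     (fun a y H => G_frame_a c be pc P PA a y (fun P0 PA0 pc0 ac P' PA' E => proj2 (F_frame _ _ _ _ _ _ _ E)) H)) as [[A1 A2] [B1 B2]].
  rewrite assigned_len, Ei in *. simpl in A1, A2. split; auto. split; auto.
  intros ac1 Q1 QA1 E. unfold Gf in B1, B2. rewrite E in B1, B2. simpl in B1, B2.
  split; eapply le_trans; eauto; apply join_le1.
Qed.

Notation bthen l be := (Asgn bvar (ACond (B_of l be) (AVar bvar) (ANum 1))).
Notation belse l be := (Asgn bvar (ACond (B_of l be) (ANum 1) (AVar bvar))).
Notation maskx x := (Asgn x (ACond (bEq 1) (ANum 0) (AVar x))).
Notation idx li i := (if li then i else mask_index i).

Definition asgn_cond (e : aexp) : option (bexp * bool) :=
  match e with
  | ACond B (AVar _) (ANum 1) => Some (B, true)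
  | ACond B (ANum 1) (AVar _) => Some (B, false)
  | _ => None
  end.
Fixpoint head_cond (c : com) : option (bexp * bool) :=
  match c with
  | Seq c1 c2 => match c1 with Skip => head_cond c2 | _ => head_cond c1 end
  | Asgn x e => if String.eqb x bvar then asgn_cond e else None
  | _ => None
  end.

Inductive bupd : aexp -> Prop :=
  | bu_t : forall B, bupd (ACond B (AVar bvar) (ANum 1))
  | bu_f : forall B, bupd (ACond B (ANum 1) (AVar bvar)).

Inductive R (bt : bool) : pub_vars -> pub_arrs -> com -> com -> pub_vars -> pub_arrs -> Prop :=
  | R_Skip : forall P PA Q QA, le Q P -> le QA PA -> R bt P PA Skip Skip Q QA
  | R_Asgn : forall P PA Q QA x e, x <> bvar -> le Q (t_update P x (label_of_aexp P e)) -> le QA PA ->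
      R bt P PA (Asgn x e) (Asgn x e) Q QA
  | R_Seq : forall P PA P1 PA1 Q QA t1 t2 s1 s2, R bt P PA t1 s1 P1 PA1 -> R bt P1 PA1 t2 s2 Q QA ->
      head_cond t2 = None -> R bt P PA (Seq t1 t2) (Seq s1 s2) Q QA
  | R_If : forall P PA Q QA l be t1 t2 s1 s2, (l = true -> label_of_bexp P be = true) ->
      R bt P PA t1 s1 Q QA -> R bt P PA t2 s2 Q QA -> head_cond t1 = None -> head_cond t2 = None ->
      R bt P PA (If (B_of l be) (Seq (bthen l be) t1) (Seq (belse l be) t2)) (If be s1 s2) Q QA
  | R_BHead : forall P PA Q QA e t s, bupd e -> R bt P PA t s Q QA -> head_cond t = None ->
      R bt P PA (Seq (Asgn bvar e) t) s Q QA
  | R_SkipT : forall P PA Q QA t s, R bt P PA t s Q QA -> R bt P PA (Seq Skip t) s Q QA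
  | R_BOnly : forall P PA Q QA e, bupd e -> le Q P -> le QA PA -> R bt P PA (Asgn bvar e) Skip Q QA
  | R_Read : forall P PA Q QA x a i (li : bool), x <> bvar -> (li = true -> label_of_aexp P i = true) ->
      le Q (t_update P x false) -> le QA PA -> R bt P PA (ARead x a (idx li i)) (ARead x a i) Q QA
  | R_ReadM : forall P PA Q QA x a i, x <> bvar -> label_of_aexp P i = true -> PA a = true ->
      le Q (t_update P x true) -> le QA PA -> R bt P PA (Seq (ARead x a i) (maskx x)) (ARead x a i) Q QA
  | R_Mask : forall P PA Q QA x, x <> bvar -> le Q (t_update P x (bt || P x)) -> le QA PA ->
      R bt P PA (maskx x) Skip Q QA
  | R_Write : forall P PA Q QA a i e (li : bool), (li = true -> label_of_aexp P i = true) -> le Q P ->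
      le QA (t_update PA a (PA a && (label_of_aexp P i && label_of_aexp P e))) ->
      R bt P PA (AWrite a (idx li i) e) (AWrite a i e) Q QA
  | R_L0 : forall P PA I IA Q QA l be t c I3 IA3,
      le I P -> le IA PA -> (l = true -> label_of_bexp I be = true) -> R bt I IA t c I3 IA3 ->
      le I I3 -> le IA IA3 -> head_cond t = None -> le Q I -> le QA IA ->
      R bt P PA (Seq (While (B_of l be) (Seq (bthen l be) t)) (belse l be)) (While be c) Q QA
  | R_L1 : forall P PA I IA Q QA l be t c I3 IA3,
      le I P -> le IA PA -> (l = true -> label_of_bexp I be = true) -> R bt I IA t c I3 IA3 ->
      le I I3 -> le IA IA3 -> head_cond t = None -> le Q I -> le QA IA ->
      R bt P PA (Seq (If (B_of l be) (Seq (Seq (bthen l be) t) (While (B_of l be) (Seq (bthen l be) t))) Skip)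
                     (belse l be))
                (If be (Seq c (While be c)) Skip) Q QA
  | R_L2 : forall P PA P1 PA1 I IA Q QA l be t c I3 IA3 A s,
      R bt P PA A s P1 PA1 -> le I P1 -> le IA PA1 ->
      (l = true -> label_of_bexp I be = true) -> R bt I IA t c I3 IA3 ->
      le I I3 -> le IA IA3 -> head_cond t = None -> le Q I -> le QA IA ->
      R bt P PA (Seq (Seq A (While (B_of l be) (Seq (bthen l be) t))) (belse l be)) (Seq s (While be c)) Q QA.

Lemma R_weak : forall bt P PA t s Q QA, R bt P PA t s Q QA ->
  forall Q' QA', le Q' Q -> le QA' QA -> R bt P PA t s Q' QA'.
Proof.
  induction 1; intros Q' QA' HQ HQA.
  all: try (econstructor; eauto using le_trans; fail).
Qed.

Lemma R_up : forall P PA t s Q QA, R false P PA t s Q QA -> R true P PA t s Q QA.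
Proof.
  induction 1; try (econstructor; eauto; fail).
  apply R_Mask; auto. eapply le_trans; eauto. apply le_upd. apply le_refl. auto.
Qed.

Lemma R_bt : forall bt bt' P PA t s Q QA, R bt P PA t s Q QA -> (bt' = false -> bt = false) -> R bt' P PA t s Q QA.
Proof.
  intros. destruct bt, bt'; auto. discriminate H0; auto. apply R_up; auto.
Qed.
Lemma F_R : forall c P PA pc ac P' PA', ~ In bvar (used_vars c) ->
  static_tracking c P PA pc = (ac, P', PA') ->
  R false P PA (fs_flex_slh ac) c P' PA' /\ head_cond (fs_flex_slh ac) = None.
Proof.
  induction c; intros P PA pc ac P' PA' Hb E.
  - simpl in E; inversion E; subst. split; [constructor; apply le_refl | reflexivity].
  - simpl in E; inversion E; subst. simpl in Hb.
    assert (x <> bvar) by (intro; subst; apply Hb; auto).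
    split; simpl. constructor; auto; apply le_refl.
    apply String.eqb_neq in H. rewrite H. auto.
  - simpl in E. simpl in Hb. rewrite in_app_iff in Hb.
    destruct (static_tracking c1 P PA pc) as [[a1 Q1] QA1] eqn:F1.
    destruct (static_tracking c2 Q1 QA1 pc) as [[b1 R1] RA1] eqn:F2.
    inversion E; subst.
    destruct (IHc1 _ _ _ _ _ _ ltac:(tauto) F1). destruct (IHc2 _ _ _ _ _ _ ltac:(tauto) F2).
    split. simpl. econstructor; eauto.
    simpl. destruct (fs_flex_slh a1); auto.
  - simpl in E. simpl in Hb. rewrite !in_app_iff in Hb.
    destruct (static_tracking c1 P PA _) as [[a1 Q1] QA1] eqn:F1.
    destruct (static_tracking c2 P PA _) as [[b1 R1] RA1] eqn:F2.
    inversion E; subst.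
    destruct (IHc1 _ _ _ _ _ _ ltac:(tauto) F1). destruct (IHc2 _ _ _ _ _ _ ltac:(tauto) F2).
    split; [|reflexivity]. simpl. apply R_If; auto.
    + eapply R_weak; eauto. apply join_le1. apply join_le1.
    + eapply R_weak; eauto. apply join_le2. apply join_le2.
  - rewrite st_while in E. simpl in Hb. rewrite !in_app_iff in Hb.
    destruct (Nat.iter _ (Gf c be pc P PA) _) as [Pf PAf] eqn:Ei.
    destruct (while_fix _ _ _ _ _ _ _ Ei) as [H1 [H2 H3]].
    destruct (static_tracking c Pf PAf _) as [[a1 Q1] QA1] eqn:F1.
    inversion E; subst.
    destruct (H3 a1 Q1 QA1 eq_refl). destruct (IHc _ _ _ _ _ _ ltac:(tauto) F1).
    split; [|reflexivity]. simpl. eapply R_L0; eauto using le_refl.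
  - simpl in E; inversion E; subst. simpl in Hb.
    assert (x <> bvar) by (intro; subst; apply Hb; auto).
    simpl. destruct (label_of_aexp P i) eqn:Li.
    + destruct (join pc (join true (PA' a))) eqn:Lx.
      * unfold join in Lx. rewrite andb_true_iff in Lx. destruct Lx as [_ Lx]. simpl in Lx.
        split; [|reflexivity]. apply R_ReadM; auto using le_refl.
      * split; [|reflexivity]. apply (R_Read false _ _ _ _ x a i true); auto using le_refl.
    + assert (Lx : join pc (join false (PA' a)) = false) by (unfold join; simpl; apply andb_false_r).
      rewrite Lx. split; [|reflexivity]. apply (R_Read false _ _ _ _ x a i false); auto using le_refl. discriminate.
  - simpl in E; injection E as <- <- <-. simpl.
    destruct (label_of_aexp P i) eqn:Li.
    + split; [|reflexivity]. apply (R_Write false _ _ _ _ a i e true); auto using le_refl.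
      apply le_upd. apply le_refl. unfold join. rewrite Li. intros. rewrite !andb_true_iff in *. tauto.
    + split; [|reflexivity]. apply (R_Write false _ _ _ _ a i e false); auto using le_refl. discriminate.
      apply le_upd. apply le_refl. unfold join. rewrite Li. intros. rewrite !andb_true_iff in *. tauto.
Qed.
Definition hc_ok (t : com) (rho : state) := forall B v, head_cond t = Some (B, v) -> beval rho B = v.
Definition hc_neg (t : com) (rho : state) := exists B v, head_cond t = Some (B, v) /\ beval rho B = negb v.
Definition agree1 (s : com) (r1 : state) (m1 : mem) (r2 : state) (m2 : mem) :=
  forall s1 r1' m1' o1 s2 r2' m2' o2,
    seq_eval_small_step s r1 m1 s1 r1' m1' o1 -> seq_eval_small_step s r2 m2 s2 r2' m2' o2 -> o1 = o2.

Definition post (bt : bool) (Q : pub_vars) (QA : pub_arrs) (s : com) (rho1 : state) (mu1 : mem) (rho2 : state) (mu2 : mem)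
  (t' : com) (bt' : bool) (rho1' : state) (mu1' : mem) (rho2' : state) (mu2' : mem) : Prop :=
  exists s' P' PA', R bt' P' PA' t' s' Q QA /\ pub_equiv P' rho1' rho2' /\ rho1' bvar = rho2' bvar /\
  (bt' = false -> bt = false /\ rho1' bvar = 0 /\ pub_equiv PA' mu1' mu2' /\ hc_ok t' rho1' /\ hc_ok t' rho2' /\
     ((s' = s /\ rho1' = rho1 /\ mu1' = mu1 /\ rho2' = rho2 /\ mu2' = mu2) \/
      (exists os, seq_eval_small_step s rho1 mu1 s' rho1' mu1' os /\ seq_eval_small_step s rho2 mu2 s' rho2' mu2' os))) /\
  (bt' = true -> rho1' bvar = 1 \/ (rho1' bvar = 0 /\ hc_neg t' rho1' /\ hc_neg t' rho2')).

Lemma hc_seq : forall t1 t2, head_cond t2 = None -> head_cond (Seq t1 t2) = head_cond t1.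
Proof. intros. simpl. destruct t1; auto. Qed.
Lemma hc_seq' : forall t1 t2, t1 <> Skip -> head_cond (Seq t1 t2) = head_cond t1.
Proof. intros. simpl. destruct t1; auto. congruence. Qed.
Lemma hc_asgn : forall x e, x <> bvar -> head_cond (Asgn x e) = None.
Proof. intros. simpl. apply String.eqb_neq in H. rewrite H. auto. Qed.
Lemma hc_none_ok : forall t rho, head_cond t = None -> hc_ok t rho.
Proof. unfold hc_ok; intros. congruence. Qed.
Lemma hc_none_b1 : forall t rho1 rho2, head_cond t = None ->
  (rho1 bvar = 1 \/ (rho1 bvar = 0 /\ hc_neg t rho1 /\ hc_neg t rho2)) -> rho1 bvar = 1.
Proof. intros. destruct H0 as [|[_ [[B [v [H1 _]]] _]]]; congruence. Qed.
Lemma hc_ok_eq : forall t t' rho, head_cond t' = head_cond t -> hc_ok t rho -> hc_ok t' rho.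
Proof. unfold hc_ok; intros. rewrite H in H1. eauto. Qed.
Lemma hc_neg_eq : forall t t' rho, head_cond t' = head_cond t -> hc_neg t rho -> hc_neg t' rho.
Proof. unfold hc_neg; intros. rewrite H. auto. Qed.

Lemma bupd_val : forall e, bupd e -> exists B v, asgn_cond e = Some (B, v) /\
  forall rho, aeval rho e = if Bool.eqb (beval rho B) v then rho bvar else 1.
Proof.
  intros e H; inversion H; subst; eexists; eexists; split; try reflexivity;
  intros rho; simpl; destruct (beval rho B); reflexivity.
Qed.
Lemma hc_bhead : forall e t, head_cond (Seq (Asgn bvar e) t) = asgn_cond e.
Proof. reflexivity. Qed.
Lemma hc_bonly : forall e, head_cond (Asgn bvar e) = asgn_cond e.
Proof. reflexivity. Qed.

Lemma t_update_same : forall {A} (m : total_map A) x, t_update m x (m x) = m.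
Proof. intros. apply functional_extensionality. intros y. unfold t_update. destruct (String.eqb_spec x y); subst; auto. Qed.
Lemma t_update_shadow : forall {A} (m : total_map A) x v w, t_update (t_update m x v) x w = t_update m x w.
Proof. intros. apply functional_extensionality. intros y. unfold t_update. destruct (String.eqb_spec x y); subst; auto. Qed.

Lemma pe_upd : forall {X} P Q (r1 r2 : total_map X) x (l : bool) v1 v2, pub_equiv P r1 r2 -> le Q (t_update P x l) ->
  (l = true -> v1 = v2) -> pub_equiv Q (t_update r1 x v1) (t_update r2 x v2).
Proof.
  unfold pub_equiv, le. intros. apply H0 in H2. unfold t_update in *. destruct (String.eqb x x0); auto.
Qed.
Lemma pe_upd_same : forall {X} P (r1 r2 : total_map X) x v, pub_equiv P r1 r2 ->
  pub_equiv P (t_update r1 x v) (t_update r2 x v).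
Proof. unfold pub_equiv. intros. unfold t_update. destruct (String.eqb x x0); auto. Qed.

Lemma B_of_0 : forall rho l be, rho bvar = 0 -> beval rho (B_of l be) = beval rho be.
Proof. intros. destruct l; simpl; auto. rewrite H. auto. Qed.
Lemma B_of_1 : forall rho be, rho bvar = 1 -> beval rho (B_of false be) = false.
Proof. intros. simpl. rewrite H. auto. Qed.
Lemma mask_0 : forall rho (li : bool) i, rho bvar = 0 -> aeval rho (idx li i) = aeval rho i.
Proof. intros. destruct li; simpl; auto. rewrite H. auto. Qed.
Lemma mask_1 : forall rho i, rho bvar = 1 -> aeval rho (mask_index i) = 0.
Proof. intros. simpl. rewrite H. auto. Qed.

Lemma B_eq2 : forall P r1 r2 l be, pub_equiv P r1 r2 -> r1 bvar = 1 -> r2 bvar = 1 ->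
  (l = true -> label_of_bexp P be = true) -> beval r1 (B_of l be) = beval r2 (B_of l be).
Proof.
  intros. destruct l. simpl. eapply label_b; eauto. rewrite !B_of_1; auto.
Qed.
Lemma idx_eq2 : forall P r1 r2 (li : bool) i, pub_equiv P r1 r2 -> r1 bvar = 1 -> r2 bvar = 1 ->
  (li = true -> label_of_aexp P i = true) -> aeval r1 (idx li i) = aeval r2 (idx li i).
Proof.
  intros. destruct li. eapply label_a; eauto. rewrite !mask_1; auto.
Qed.

Lemma no_step_skip : forall rho mu bt c' rho' mu' bt' d o, ~ spec_eval_small_step Skip rho mu bt c' rho' mu' bt' d o.
Proof. intros; intro H; inversion H. Qed.

Lemma agree_seq : forall s1 s2 r1 m1 r2 m2, agree1 (Seq s1 s2) r1 m1 r2 m2 -> agree1 s1 r1 m1 r2 m2.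
Proof. unfold agree1; intros. eapply H; econstructor; eauto. Qed.

Lemma inv_asgn : forall x e rho mu bt c' rho' mu' bt' d o,
  spec_eval_small_step (Asgn x e) rho mu bt c' rho' mu' bt' d o ->
  c' = Skip /\ rho' = t_update rho x (aeval rho e) /\ mu' = mu /\ bt' = bt /\ d = [] /\ o = [].
Proof. intros. inversion H; subst; auto 10. Qed.
Lemma inv_if : forall be c1 c2 rho mu bt c' rho' mu' bt' d o,
  spec_eval_small_step (If be c1 c2) rho mu bt c' rho' mu' bt' d o ->
  rho' = rho /\ mu' = mu /\ o = [OBranch (beval rho be)] /\
  ((c' = (if beval rho be then c1 else c2) /\ bt' = bt /\ d = [DStep]) \/
   (c' = (if beval rho be then c2 else c1) /\ bt' = true /\ d = [DForce])).
Proof. intros. inversion H; subst; auto 10. Qed.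
Lemma inv_seq : forall c1 c2 rho mu bt c' rho' mu' bt' d o,
  spec_eval_small_step (Seq c1 c2) rho mu bt c' rho' mu' bt' d o ->
  (exists c1', spec_eval_small_step c1 rho mu bt c1' rho' mu' bt' d o /\ c' = Seq c1' c2) \/
  (c1 = Skip /\ c' = c2 /\ rho' = rho /\ mu' = mu /\ bt' = bt /\ d = [] /\ o = []).
Proof. intros. inversion H; subst; eauto 10. Qed.
Lemma inv_while : forall be c rho mu bt c' rho' mu' bt' d o,
  spec_eval_small_step (While be c) rho mu bt c' rho' mu' bt' d o ->
  c' = If be (Seq c (While be c)) Skip /\ rho' = rho /\ mu' = mu /\ bt' = bt /\ d = [] /\ o = [].
Proof. intros. inversion H; subst; auto 10. Qed.
Lemma inv_read : forall x a ie rho mu bt c' rho' mu' bt' d o,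
  spec_eval_small_step (ARead x a ie) rho mu bt c' rho' mu' bt' d o ->
  mu' = mu /\ bt' = bt /\ c' = Skip /\ o = [ORead a (aeval rho ie)] /\
  ((d = [DStep] /\ aeval rho ie < length (mu a) /\ rho' = t_update rho x (nth (aeval rho ie) (mu a) 0)) \/
   (exists a' j, d = [DLoad a' j] /\ bt = true /\ aeval rho ie >= length (mu a) /\ j < length (mu a') /\
      rho' = t_update rho x (nth j (mu a') 0))).
Proof. intros. inversion H; subst; (split; [auto|split;[auto|split;[auto|split;[auto|]]]]); [left|right]; eauto 10. Qed.
Lemma inv_write : forall a ie e rho mu bt c' rho' mu' bt' d o,
  spec_eval_small_step (AWrite a ie e) rho mu bt c' rho' mu' bt' d o ->
  rho' = rho /\ bt' = bt /\ c' = Skip /\ o = [OWrite a (aeval rho ie)] /\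
  ((d = [DStep] /\ aeval rho ie < length (mu a) /\ mu' = t_update mu a (upd (mu a) (aeval rho ie) (aeval rho e))) \/
   (exists a' j, d = [DStore a' j] /\ bt = true /\ aeval rho ie >= length (mu a) /\ j < length (mu a') /\
      mu' = t_update mu a' (upd (mu a') j (aeval rho e)))).
Proof. intros. inversion H; subst; (split; [auto|split;[auto|split;[auto|split;[auto|]]]]); [left|right]; eauto 10. Qed.

Lemma bupd_1 : forall e rho, bupd e ->
  (rho bvar = 1 \/ exists B v, asgn_cond e = Some (B, v) /\ beval rho B = negb v) -> aeval rho e = 1.
Proof.
  intros e rho H Hc. inversion H; subst; simpl; destruct Hc as [Hc|[B' [v [Hc Hn]]]];
  try (destruct (beval rho B); auto; fail); simpl in Hc; inversion Hc; subst; rewrite Hn; auto.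
Qed.
Lemma bupd_0 : forall e rho, bupd e -> rho bvar = 0 ->
  (forall B v, asgn_cond e = Some (B, v) -> beval rho B = v) -> aeval rho e = 0.
Proof.
  intros e rho H Hb Hc. inversion H; subst; simpl; rewrite (Hc B _ eq_refl); auto.
Qed.
Lemma t_update_same' : forall {A} (m : total_map A) x v, m x = v -> t_update m x v = m.
Proof. intros. subst. apply t_update_same. Qed.

Lemma pe_write : forall PA (m1 m2 : mem) a (l : bool) i1 i2 v1 v2, pub_equiv PA m1 m2 ->
  (l = true -> PA a = true /\ i1 = i2 /\ v1 = v2) ->
  pub_equiv (t_update PA a l) (t_update m1 a (upd (m1 a) i1 v1)) (t_update m2 a (upd (m2 a) i2 v2)).
Proof.
  unfold pub_equiv. intros PA m1 m2 a l i1 i2 v1 v2 H H0 x Hx. unfold t_update in *.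
  destruct (String.eqb_spec a x) as [E|E]; [|auto]. subst x.
  destruct (H0 Hx) as [A [-> ->]]. rewrite (H a A). auto.
Qed.
Lemma mask_val : forall rho x, aeval rho (ACond (bEq 1) (ANum 0) (AVar x)) = if Nat.eqb (rho bvar) 1 then 0 else rho x.
Proof. reflexivity. Qed.

Lemma hcL2 : forall A w b e, head_cond (Seq (Seq A (While w b)) e) = head_cond A.
Proof. intros. destruct A; reflexivity. Qed.
Lemma step_R : forall bt P PA t s Q QA, R bt P PA t s Q QA ->
  forall rho1 mu1 rho2 mu2 t1 rho1' mu1' bt1 t2 rho2' mu2' bt2 d o1 o2,
  pub_equiv P rho1 rho2 -> rho1 bvar = rho2 bvar ->
  (bt = false -> rho1 bvar = 0 /\ pub_equiv PA mu1 mu2 /\ agree1 s rho1 mu1 rho2 mu2 /\ hc_ok t rho1 /\ hc_ok t rho2) ->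
  (bt = true -> rho1 bvar = 1 \/ (rho1 bvar = 0 /\ hc_neg t rho1 /\ hc_neg t rho2)) ->
  spec_eval_small_step t rho1 mu1 bt t1 rho1' mu1' bt1 d o1 ->
  spec_eval_small_step t rho2 mu2 bt t2 rho2' mu2' bt2 d o2 ->
  o1 = o2 /\ t1 = t2 /\ bt1 = bt2 /\ post bt Q QA s rho1 mu1 rho2 mu2 t1 bt1 rho1' mu1' rho2' mu2'.
Proof.
  induction 1; intros rho1 mu1 rho2 mu2 t1' rho1' mu1' bt1 t2' rho2' mu2' bt2 d o1 o2 Hpe Hb Hp1 Hp2 S1 S2.
  - inversion S1.
  -
    inversion S1; subst; inversion S2; subst. split; [|split; [|split]]; auto.
    exists Skip, (t_update P x (label_of_aexp P e)), PA. split; [constructor; auto|].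
    split; [eapply pe_upd; eauto using le_refl; intros; eapply label_a; eauto|].
    rewrite !t_update_neq by auto. split; auto. split.
    + intros ->. destruct (Hp1 eq_refl) as [Hb0 [Hpa [Hag [Ho1 Ho2]]]].
      repeat split; auto using hc_none_ok. right. exists []. split; constructor.
    + intros ->. left. eapply hc_none_b1; eauto. apply hc_asgn; auto.
  -
    inversion S1; subst.
    + inversion S2; subst; [| match goal with H: spec_eval_small_step Skip _ _ _ _ _ _ _ _ _ |- _ => inversion H end].
      edestruct IHR1 as [Ho [Ht [Hbt Hpost]]]; [eauto | eauto | | | eassumption | eassumption |].
      { intros Hbt0; destruct (Hp1 Hbt0) as [Hb0 [Hpa [Hag [Ho1 Ho2]]]]. repeat split; auto.
        eapply agree_seq; eauto. eapply hc_ok_eq; [|exact Ho1]. symmetry; apply hc_seq; auto.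
        eapply hc_ok_eq; [|exact Ho2]. symmetry; apply hc_seq; auto. }
      { intros Hbt0; destruct (Hp2 Hbt0) as [|[Hb0 [Hn1 Hn2]]]; auto. right. repeat split; auto.
        eapply hc_neg_eq; [|exact Hn1]. symmetry; apply hc_seq; auto.
        eapply hc_neg_eq; [|exact Hn2]. symmetry; apply hc_seq; auto. }
      subst. split; auto. split; auto. split; auto.
      destruct Hpost as [s' [P' [PA' [HR [Hpe' [Hb' [Hph1 Hph2]]]]]]].
      exists (Seq s' s2), P', PA'. split.
      { econstructor; eauto. eapply R_bt; eauto. intros; apply Hph1; auto. }
      split; auto. split; auto. split.
      * intros Hbt0. destruct (Hph1 Hbt0) as [Hb0 [Hb00 [Hpa [Ho1 [Ho2 Hsrc]]]]]. repeat split; auto.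
        eapply hc_ok_eq; [|exact Ho1]. apply hc_seq; auto.
        eapply hc_ok_eq; [|exact Ho2]. apply hc_seq; auto.
        destruct Hsrc as [[-> [-> [-> [-> ->]]]]|[os [Hs1 Hs2]]]. left; auto.
        right. exists os. split; constructor; auto.
      * intros Hbt0. destruct (Hph2 Hbt0) as [|[Hb0 [Hn1 Hn2]]]; auto. right. repeat split; auto.
        eapply hc_neg_eq; [|exact Hn1]. apply hc_seq; auto.
        eapply hc_neg_eq; [|exact Hn2]. apply hc_seq; auto.
    + inversion S2; subst; [match goal with H: spec_eval_small_step Skip _ _ _ _ _ _ _ _ _ |- _ => inversion H end|].
      inversion H; subst. split; auto. split; auto. split; auto.
      exists s2, P1, PA1. split; auto. split. eapply pe_le; eauto. split; auto. split.
      * intros ->. destruct (Hp1 eq_refl) as [Hb0 [Hpa [Hag [Ho1 Ho2]]]]. repeat split; auto using hc_none_ok.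
        eapply pe_le; eauto. right. exists []. split; constructor.
      * intros ->. left. eapply hc_none_b1; [|apply Hp2; auto]. simpl. auto.
  -
    apply inv_if in S1 as [-> [-> [-> S1]]]. apply inv_if in S2 as [-> [-> [-> S2]]].
    destruct bt.
    + assert (Hb1 : rho1 bvar = 1) by (eapply hc_none_b1; [|apply Hp2; auto]; reflexivity).
      assert (Hb2 : rho2 bvar = 1) by congruence.
      assert (HB := B_eq2 _ _ _ l be Hpe Hb1 Hb2 H).
      rewrite <- HB in S2 |- *.
      destruct S1 as [[-> [-> ->]]|[-> [-> ->]]]; destruct S2 as [[-> [-> Hd]]|[-> [-> Hd]]]; try discriminate;
        (split; [auto|split; [auto|split; [auto|]]]);
        destruct (beval rho1 (B_of l be));
        match goal with |- post _ _ _ _ _ _ _ _ (Seq _ ?tt) _ _ _ _ _ =>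
          first [ exists s1, P, PA; assert (HH : R true P PA tt s1 Q QA) by auto
                | exists s2, P, PA; assert (HH : R true P PA tt s2 Q QA) by auto ] end;
        (split; [apply R_BHead; auto; constructor|]);
        (split; [auto|split; [auto|split; [intros; discriminate| intros; left; auto]]]).
    + destruct (Hp1 eq_refl) as [Hb0 [Hpa [Hag [Ho1 Ho2]]]].
      assert (Hb2 : rho2 bvar = 0) by congruence.
      assert (Hbe : beval rho1 be = beval rho2 be).
      { assert (X := Hag _ _ _ _ _ _ _ _ (SSM_If be s1 s2 rho1 mu1) (SSM_If be s1 s2 rho2 mu2)). congruence. }
      rewrite B_of_0 in S1 by auto. rewrite B_of_0 in S2 by auto.
      rewrite (B_of_0 rho1) by auto. rewrite (B_of_0 rho2) by auto. rewrite <- Hbe in S2 |- *.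
      destruct S1 as [[-> [-> ->]]|[-> [-> ->]]]; destruct S2 as [[-> [-> Hd]]|[-> [-> Hd]]]; try discriminate;
        (split; [auto|split; [auto|split; [auto|]]]);
        destruct (beval rho1 be) eqn:Ebe.
      * exists s1, P, PA. split; [apply R_BHead; auto; constructor|].
        split; auto. split; auto. split; [|intros; discriminate].
        intros _. repeat split; auto.
        1,2: intros B v; rewrite hc_bhead; simpl; intros HH; inversion HH; subst; rewrite B_of_0; congruence.
        right. exists [OBranch true].
        split; [assert (X := SSM_If be s1 s2 rho1 mu1); rewrite Ebe in X; exact X
               |assert (X := SSM_If be s1 s2 rho2 mu2); rewrite <- Hbe in X; try rewrite Ebe in X; exact X].
      * exists s2, P, PA. split; [apply R_BHead; auto; constructor|].
        split; auto. split; auto. split; [|intros; discriminate].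
        intros _. repeat split; auto.
        1,2: intros B v; rewrite hc_bhead; simpl; intros HH; inversion HH; subst; rewrite B_of_0; congruence.
        right. exists [OBranch false].
        split; [assert (X := SSM_If be s1 s2 rho1 mu1); rewrite Ebe in X; exact X
               |assert (X := SSM_If be s1 s2 rho2 mu2); rewrite <- Hbe in X; try rewrite Ebe in X; exact X].
      * exists s2, P, PA. split; [apply R_BHead; auto using R_up; constructor|].
        split; auto. split; auto. split; [intros; discriminate|].
        intros _. right. split; auto. split; exists (B_of l be), false; split; auto; rewrite B_of_0; simpl; congruence.
      * exists s1, P, PA. split; [apply R_BHead; auto using R_up; constructor|].
        split; auto. split; auto. split; [intros; discriminate|].
        intros _. right. split; auto. split; exists (B_of l be), true; split; auto; rewrite B_of_0; simpl; congruence.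
  -
    apply inv_seq in S1 as [[c1' [S1 ->]]|[Habs _]]; [|discriminate].
    apply inv_asgn in S1 as [-> [-> [-> [-> [-> ->]]]]].
    apply inv_seq in S2 as [[c2' [S2 ->]]|[Habs _]]; [|discriminate].
    apply inv_asgn in S2 as [-> [-> [-> [-> [_ Ho]]]]].
    split; auto. split; auto. split; auto.
    exists s, P, PA. split; [apply R_SkipT; auto|].
    destruct bt.
    + assert (V : aeval rho1 e = 1 /\ aeval rho2 e = 1).
      { destruct (Hp2 eq_refl) as [Hb1|[Hb0 [Hn1 Hn2]]].
        split; apply bupd_1; auto. left; congruence.
        split; apply bupd_1; auto. }
      destruct V as [V1 V2]. rewrite V1, V2.
      split; [apply pe_upd_same; auto|]. rewrite !t_update_eq. split; auto. split; [intros; discriminate|].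
      intros; left; auto.
    + destruct (Hp1 eq_refl) as [Hb0 [Hpa [Hag [Ho1 Ho2]]]].
      assert (V1 : aeval rho1 e = 0) by (apply bupd_0; auto).
      assert (V2 : aeval rho2 e = 0) by (apply bupd_0; auto; congruence).
      rewrite V1, V2. rewrite !t_update_same' by congruence.
      split; auto. split; auto. split; [|intros; discriminate].
      intros _. repeat split; auto; try (apply hc_none_ok; simpl; auto).
      left; repeat split.
  -
    apply inv_seq in S1 as [[c1' [S1 _]]|[_ [-> [-> [-> [-> [-> ->]]]]]]]; [inversion S1|].
    apply inv_seq in S2 as [[c2' [S2 _]]|[_ [-> [-> [-> [-> [_ Ho]]]]]]]; [inversion S2|].
    split; auto. split; auto. split; auto.
    exists s, P, PA. split; auto. split; auto. split; auto. split.
    + intros ->. destruct (Hp1 eq_refl) as [Hb0 [Hpa [Hag [Ho1 Ho2]]]]. repeat split; auto;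
      try (eapply hc_ok_eq; [|eassumption]; reflexivity); try (left; repeat split).
    + intros ->. destruct (Hp2 eq_refl) as [Hb1|[Hb0 [Hn1 Hn2]]]; auto.
  -
    apply inv_asgn in S1 as [-> [-> [-> [-> [-> ->]]]]].
    apply inv_asgn in S2 as [-> [-> [-> [-> [_ Ho]]]]].
    split; auto. split; auto. split; auto.
    exists Skip, P, PA. split; [constructor; auto|].
    destruct bt.
    + assert (V : aeval rho1 e = 1 /\ aeval rho2 e = 1).
      { destruct (Hp2 eq_refl) as [Hb1|[Hb0 [Hn1 Hn2]]].
        split; apply bupd_1; auto. left; congruence.
        split; apply bupd_1; auto. }
      destruct V as [V1 V2]. rewrite V1, V2.
      split; [apply pe_upd_same; auto|]. rewrite !t_update_eq. split; auto. split; [intros; discriminate|].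
      intros; left; auto.
    + destruct (Hp1 eq_refl) as [Hb0 [Hpa [Hag [Ho1 Ho2]]]].
      assert (V1 : aeval rho1 e = 0) by (apply bupd_0; auto).
      assert (V2 : aeval rho2 e = 0) by (apply bupd_0; auto; congruence).
      rewrite V1, V2. rewrite !t_update_same' by congruence.
      split; auto. split; auto. split; [|intros; discriminate].
      intros _. repeat split; auto; try (apply hc_none_ok; simpl; auto). left; repeat split.
  -
    apply inv_read in S1 as [-> [-> [-> [-> S1]]]]. apply inv_read in S2 as [-> [-> [-> [Ho S2]]]].
    destruct bt.
    + assert (Hb1 : rho1 bvar = 1) by (eapply hc_none_b1; [|apply Hp2; auto]; reflexivity).
      assert (Hb2 : rho2 bvar = 1) by congruence.
      assert (HI := idx_eq2 _ _ _ li i Hpe Hb1 Hb2 H0).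
      rewrite Ho, <- HI. split; auto. split; auto. split; auto.
      exists Skip, (t_update P x false), PA. split; [constructor; auto|].
      destruct S1 as [[_ [_ ->]]|[a1 [j1 [_ [_ [_ [_ ->]]]]]]];
      destruct S2 as [[_ [_ ->]]|[a2 [j2 [_ [_ [_ [_ ->]]]]]]];
      (split; [eapply (pe_upd P _ _ _ x false); [exact Hpe | apply le_refl | intros; discriminate]|]);
      rewrite !t_update_neq by auto; (split; [auto|split; [intros; discriminate|intros; left; auto]]).
    + destruct (Hp1 eq_refl) as [Hb0 [Hpa [Hag [Ho1 Ho2]]]].
      assert (Hb2 : rho2 bvar = 0) by congruence.
      destruct S1 as [[-> [L1 ->]]|[a1 [j1 [_ [Habs _]]]]]; [|discriminate].
      destruct S2 as [[_ [L2 ->]]|[a2 [j2 [_ [Habs _]]]]]; [|discriminate].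
      rewrite !mask_0 in * by auto.
      assert (HI : aeval rho1 i = aeval rho2 i).
      { assert (X := Hag _ _ _ _ _ _ _ _ (SSM_ARead x a i rho1 mu1 _ eq_refl L1) (SSM_ARead x a i rho2 mu2 _ eq_refl L2)).
        congruence. }
      rewrite Ho, <- HI. split; auto. split; auto. split; auto.
      exists Skip, (t_update P x false), PA. split; [constructor; auto|].
      split; [eapply (pe_upd P _ _ _ x false); [exact Hpe | apply le_refl | intros; discriminate]|].
      rewrite !t_update_neq by auto. split; auto. split; [|intros; discriminate].
      intros _. repeat split; auto using hc_none_ok.
      right. exists [ORead a (aeval rho1 i)]. split. apply SSM_ARead; auto. rewrite HI. apply SSM_ARead; auto.
  -
    apply inv_seq in S1 as [[c1' [S1 ->]]|[Habs _]]; [|discriminate].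
    apply inv_read in S1 as [-> [-> [-> [-> S1]]]].
    apply inv_seq in S2 as [[c2' [S2 ->]]|[Habs _]]; [|discriminate].
    apply inv_read in S2 as [-> [-> [-> [Ho S2]]]].
    assert (HI : aeval rho1 i = aeval rho2 i) by (eapply label_a; eauto).
    rewrite Ho, <- HI. split; auto. split; auto. split; auto.
    destruct bt.
    + assert (Hb1 : rho1 bvar = 1) by (eapply hc_none_b1; [|apply Hp2; auto]; reflexivity).
      exists Skip, (t_update P x false), PA. split.
      { apply R_SkipT. apply R_Mask; auto. rewrite t_update_shadow. simpl. auto. }
      destruct S1 as [[_ [_ ->]]|[a1 [j1 [_ [_ [_ [_ ->]]]]]]];
      destruct S2 as [[_ [_ ->]]|[a2 [j2 [_ [_ [_ [_ ->]]]]]]];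
      (split; [eapply (pe_upd P _ _ _ x false); [exact Hpe | apply le_refl | intros; discriminate]|]);
      rewrite !t_update_neq by auto; (split; [congruence|split; [intros; discriminate|intros; left; auto]]).
    + destruct (Hp1 eq_refl) as [Hb0 [Hpa [Hag [Ho1 Ho2]]]].
      destruct S1 as [[-> [L1 ->]]|[a1 [j1 [_ [Habs _]]]]]; [|discriminate].
      destruct S2 as [[_ [L2 ->]]|[a2 [j2 [_ [Habs _]]]]]; [|discriminate].
      exists Skip, (t_update P x true), PA. split.
      { apply R_SkipT. apply R_Mask; auto. rewrite t_update_eq, t_update_shadow. simpl. auto. }
      split; [eapply (pe_upd P _ _ _ x true); [exact Hpe | apply le_refl | intros _; rewrite (Hpa a), HI; auto]|].
      rewrite !t_update_neq by auto. split; auto. split; [|intros; discriminate].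
      intros _. repeat split; auto.
      1,2: apply hc_none_ok; simpl; destruct (String.eqb x bvar); auto.
      right. exists [ORead a (aeval rho1 i)]. split. apply SSM_ARead; auto. rewrite HI. apply SSM_ARead; congruence.
  -
    apply inv_asgn in S1 as [-> [-> [-> [-> [-> ->]]]]].
    apply inv_asgn in S2 as [-> [-> [-> [-> [_ Ho]]]]].
    split; auto. split; auto. split; auto.
    destruct bt.
    + assert (Hb1 : rho1 bvar = 1) by (eapply hc_none_b1; [|apply Hp2; auto]; apply hc_asgn; auto).
      assert (Hb2 : rho2 bvar = 1) by congruence.
      rewrite !mask_val, Hb1, Hb2. cbv [Nat.eqb].
      exists Skip, (t_update P x true), PA. split; [constructor; auto|].
      split; [eapply (pe_upd P _ _ _ x true); [exact Hpe | apply le_refl | auto]|].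
      rewrite !t_update_neq by auto. split; auto. split; [intros; discriminate|intros; left; auto].
    + destruct (Hp1 eq_refl) as [Hb0 [Hpa [Hag [Ho1 Ho2]]]].
      assert (Hb2 : rho2 bvar = 0) by congruence.
      rewrite !mask_val, Hb0, Hb2. cbv [Nat.eqb]. rewrite !t_update_same.
      exists Skip, P, PA. split; [constructor; auto|].
      simpl in H0. rewrite t_update_same in H0. auto.
      split; auto. split; auto. split; [|intros; discriminate].
      intros _. repeat split; auto using hc_none_ok. left; repeat split.
  -
    apply inv_write in S1 as [-> [-> [-> [-> S1]]]]. apply inv_write in S2 as [-> [-> [-> [Ho S2]]]].
    destruct bt.
    + assert (Hb1 : rho1 bvar = 1) by (eapply hc_none_b1; [|apply Hp2; auto]; reflexivity).
      assert (Hb2 : rho2 bvar = 1) by congruence.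
      assert (HI := idx_eq2 _ _ _ li i Hpe Hb1 Hb2 H).
      rewrite Ho, <- HI. split; auto. split; auto. split; auto.
      exists Skip, P, (t_update PA a (PA a && (label_of_aexp P i && label_of_aexp P e))).
      split; [constructor; auto|].
      split; auto. split; auto. split; [intros; discriminate|intros; left; auto].
    + destruct (Hp1 eq_refl) as [Hb0 [Hpa [Hag [Ho1 Ho2]]]].
      assert (Hb2 : rho2 bvar = 0) by congruence.
      destruct S1 as [[-> [L1 ->]]|[a1 [j1 [_ [Habs _]]]]]; [|discriminate].
      destruct S2 as [[_ [L2 ->]]|[a2 [j2 [_ [Habs _]]]]]; [|discriminate].
      rewrite !mask_0 in * by auto.
      assert (HI : aeval rho1 i = aeval rho2 i).
      { assert (X := Hag _ _ _ _ _ _ _ _ (SSM_AWrite a i e rho1 mu1 _ _ eq_refl eq_refl L1)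
                                        (SSM_AWrite a i e rho2 mu2 _ _ eq_refl eq_refl L2)).
        congruence. }
      rewrite Ho, <- HI. split; auto. split; auto. split; auto.
      exists Skip, P, (t_update PA a (PA a && (label_of_aexp P i && label_of_aexp P e))).
      split; [constructor; auto|].
      split; auto. split; auto. split; [|intros; discriminate].
      intros _. repeat split; auto using hc_none_ok.
      apply pe_write; auto. intros Hl. rewrite !andb_true_iff in Hl. destruct Hl as [A [B C]].
      repeat split; auto. eapply label_a; eauto.
      right. exists [OWrite a (aeval rho1 i)]. split. eapply SSM_AWrite; eauto. rewrite HI. eapply SSM_AWrite; eauto.
  -
    apply inv_seq in S1 as [[c1' [S1 ->]]|[Habs _]]; [|discriminate].
    apply inv_while in S1 as [-> [-> [-> [-> [-> ->]]]]].
    apply inv_seq in S2 as [[c2' [S2 ->]]|[Habs _]]; [|discriminate].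
    apply inv_while in S2 as [-> [-> [-> [-> [_ Ho]]]]].
    split; auto. split; auto. split; auto.
    exists (If be (Seq c (While be c)) Skip), P, PA. split; [eapply R_L1; eauto|].
    split; auto. split; auto. split.
    + intros ->. destruct (Hp1 eq_refl) as [Hb0 [Hpa [Hag [Ho1 Ho2]]]]. repeat split; auto;
      try (apply hc_none_ok; reflexivity); try (right; exists []; split; constructor).
    + intros ->. left. eapply hc_none_b1; [|apply Hp2; auto]. reflexivity.
  -
    apply inv_seq in S1 as [[c1' [S1 ->]]|[Habs _]]; [|discriminate].
    apply inv_if in S1 as [-> [-> [-> S1]]].
    apply inv_seq in S2 as [[c2' [S2 ->]]|[Habs _]]; [|discriminate].
    apply inv_if in S2 as [-> [-> [-> S2]]].
    assert (HRt : R bt I IA (Seq (bthen l be) t) c I3 IA3) by (apply R_BHead; auto; constructor).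
    destruct bt.
    + assert (Hb1 : rho1 bvar = 1) by (eapply hc_none_b1; [|apply Hp2; auto]; reflexivity).
      assert (Hb2 : rho2 bvar = 1) by congruence.
      assert (HB := B_eq2 _ _ _ l be Hpe Hb1 Hb2 (fun E => label_b_mono _ _ _ H (H1 E))).
      rewrite <- HB in S2 |- *.
      destruct S1 as [[-> [-> ->]]|[-> [-> ->]]]; destruct S2 as [[-> [-> Hd]]|[-> [-> Hd]]]; try discriminate;
        (split; [auto|split; [auto|split; [auto|]]]);
        destruct (beval rho1 (B_of l be)).
      1,4: exists (Seq c (While be c)), I, IA; split; [eapply R_L2; eauto|];
           split; [eapply pe_le; [exact H | exact Hpe]|]; split; [auto|split; [intros; discriminate|intros; left; auto]].
      all: exists Skip, P, PA; split; [apply R_SkipT; apply R_BOnly; [constructor|eapply le_trans; eauto|eapply le_trans; eauto]|];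
           split; [auto|]; split; [auto|split; [intros; discriminate|intros; left; auto]].
    + destruct (Hp1 eq_refl) as [Hb0 [Hpa [Hag [Ho1 Ho2]]]].
      assert (Hb2 : rho2 bvar = 0) by congruence.
      assert (Hbe : beval rho1 be = beval rho2 be).
      { assert (X := Hag _ _ _ _ _ _ _ _ (SSM_If be (Seq c (While be c)) Skip rho1 mu1)
                                        (SSM_If be (Seq c (While be c)) Skip rho2 mu2)). congruence. }
      rewrite B_of_0 in S1 by auto. rewrite B_of_0 in S2 by auto.
      rewrite (B_of_0 rho1) by auto. rewrite (B_of_0 rho2) by auto. rewrite <- Hbe in S2 |- *.
      destruct S1 as [[-> [-> ->]]|[-> [-> ->]]]; destruct S2 as [[-> [-> Hd]]|[-> [-> Hd]]]; try discriminate;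
        (split; [auto|split; [auto|split; [auto|]]]);
        destruct (beval rho1 be) eqn:Ebe.
      * exists (Seq c (While be c)), I, IA. split; [eapply R_L2; eauto|].
        split; [eapply pe_le; [exact H | exact Hpe]|]. split; auto. split; [|intros; discriminate].
        intros _. repeat split; auto;
        try (eapply pe_le; [exact H0|exact Hpa]); try (intros B v HH; simpl in HH; inversion HH; subst; rewrite B_of_0; congruence).
        right. exists [OBranch true].
        split; [assert (X := SSM_If be (Seq c (While be c)) Skip rho1 mu1); rewrite Ebe in X; exact X
               |assert (X := SSM_If be (Seq c (While be c)) Skip rho2 mu2); rewrite <- Hbe in X; try rewrite Ebe in X; exact X].
      * exists Skip, P, PA. split; [apply R_SkipT; apply R_BOnly; [constructor|eapply le_trans; eauto|eapply le_trans; eauto]|].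
        split; auto. split; auto. split; [|intros; discriminate].
        intros _. repeat split; auto.
        1,2: intros B v HH; simpl in HH; inversion HH; subst; rewrite B_of_0; congruence.
        right. exists [OBranch false].
        split; [assert (X := SSM_If be (Seq c (While be c)) Skip rho1 mu1); rewrite Ebe in X; exact X
               |assert (X := SSM_If be (Seq c (While be c)) Skip rho2 mu2); rewrite <- Hbe in X; try rewrite Ebe in X; exact X].
      * exists Skip, P, PA. split; [apply R_SkipT; apply R_BOnly; [constructor|eapply le_trans; eauto|eapply le_trans; eauto]|].
        split; auto. split; auto. split; [intros; discriminate|].
        intros _. right. split; auto. split; exists (B_of l be), false; split; auto; rewrite B_of_0; simpl; congruence.
      * exists (Seq c (While be c)), I, IA. split; [eapply R_L2; eauto using R_up|].
        split; [eapply pe_le; [exact H | exact Hpe]|]. split; auto. split; [intros; discriminate|].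
        intros _. right. split; auto. split; exists (B_of l be), true; split; auto; rewrite B_of_0; simpl; congruence.
  -
    apply inv_seq in S1 as [[c1' [S1 ->]]|[Habs _]]; [|discriminate].
    apply inv_seq in S2 as [[c2' [S2 ->]]|[Habs _]]; [|discriminate].
    apply inv_seq in S1 as [[a1' [S1 ->]]|[-> [-> [-> [-> [-> [-> ->]]]]]]].
    + apply inv_seq in S2 as [[a2' [S2 ->]]|[-> _]]; [|inversion S1].
      edestruct IHR1 as [Ho [Ht [Hbt Hpost]]]; [eauto | eauto | | | eassumption | eassumption |].
      { intros Hbt0; destruct (Hp1 Hbt0) as [Hb0 [Hpa [Hag [Ho1 Ho2]]]]. repeat split; auto.
        eapply agree_seq; eauto. eapply hc_ok_eq; [|exact Ho1]. symmetry; apply hcL2.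
        eapply hc_ok_eq; [|exact Ho2]. symmetry; apply hcL2. }
      { intros Hbt0; destruct (Hp2 Hbt0) as [|[Hb0 [Hn1 Hn2]]]; auto. right. repeat split; auto.
        eapply hc_neg_eq; [|exact Hn1]. symmetry; apply hcL2.
        eapply hc_neg_eq; [|exact Hn2]. symmetry; apply hcL2. }
      subst. split; auto. split; auto. split; auto.
      destruct Hpost as [s' [P' [PA' [HR [Hpe' [Hb' [Hph1 Hph2]]]]]]].
      exists (Seq s' (While be c)), P', PA'. split.
      { eapply R_L2; eauto. eapply R_bt; eauto. intros; apply Hph1; auto. }
      split; auto. split; auto. split.
      * intros Hbt0. destruct (Hph1 Hbt0) as [Hb0 [Hb00 [Hpa [Ho1 [Ho2 Hsrc]]]]]. repeat split; auto.
        eapply hc_ok_eq; [|exact Ho1]. apply hcL2.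
        eapply hc_ok_eq; [|exact Ho2]. apply hcL2.
        destruct Hsrc as [[-> [-> [-> [-> ->]]]]|[os [Hs1 Hs2]]]. left; auto.
        right. exists os. split; constructor; auto.
      * intros Hbt0. destruct (Hph2 Hbt0) as [|[Hb0 [Hn1 Hn2]]]; auto. right. repeat split; auto.
        eapply hc_neg_eq; [|exact Hn1]. apply hcL2.
        eapply hc_neg_eq; [|exact Hn2]. apply hcL2.
    + apply inv_seq in S2 as [[a2' [S2 _]]|[_ [-> [-> [-> [-> [_ Ho]]]]]]]; [inversion S2|].
      inversion H; subst.
      split; auto. split; auto. split; auto.
      exists (While be c), P1, PA1. split; [eapply R_L0; eauto|].
      split; [eapply pe_le; eauto|]. split; auto. split.
      * intros ->. destruct (Hp1 eq_refl) as [Hb0 [Hpa [Hag [Ho1 Ho2]]]]. repeat split; auto;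
        try (eapply pe_le; eauto; fail); try (apply hc_none_ok; reflexivity); try (right; exists []; split; constructor).
      * intros ->. left. eapply hc_none_b1; [|apply Hp2; auto]. reflexivity.
Qed.

Lemma step_dlen : forall t r1 m1 b1 t1 r1' m1' b1' d1 o1, spec_eval_small_step t r1 m1 b1 t1 r1' m1' b1' d1 o1 ->
  forall r2 m2 b2 t2 r2' m2' b2' d2 o2, spec_eval_small_step t r2 m2 b2 t2 r2' m2' b2' d2 o2 ->
  length d1 = length d2.
Proof.
  induction 1; intros r2 m2 b2 t2 r2' m2' b2' d2 o2 Hs; inversion Hs; subst; simpl; auto;
  try (eapply IHspec_eval_small_step; eauto; fail);
  match goal with H : spec_eval_small_step Skip _ _ _ _ _ _ _ _ _ |- _ => inversion H end.
Qed.
Lemma step_olen : forall t r m b t' r' m' b' d o, spec_eval_small_step t r m b t' r' m' b' d o -> length o = length d.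
Proof. induction 1; simpl; auto. Qed.
Lemma multi_len : forall t r m b t' r' m' b' d o, multi_spec t r m b t' r' m' b' d o -> length o = length d.
Proof. induction 1; simpl; auto. rewrite !length_app. apply step_olen in H. lia. Qed.
Lemma app_len_inv : forall {A} (a b c d : list A), length a = length b -> a ++ c = b ++ d -> a = b /\ c = d.
Proof.
  induction a; destruct b; simpl; intros; try discriminate; auto.
  inversion H0; subst. destruct (IHa b c d ltac:(lia) H3). subst; auto.
Qed.

Lemma seq_olen : forall s r1 m1 s1 r1' m1' o1, seq_eval_small_step s r1 m1 s1 r1' m1' o1 ->
  forall r2 m2 s2 r2' m2' o2, seq_eval_small_step s r2 m2 s2 r2' m2' o2 -> length o1 = length o2.
Proof.
  induction 1; intros r2 m2 s2 r2' m2' o2 Hs; inversion Hs; subst; simpl; auto;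
  try (eapply IHseq_eval_small_step; eauto; fail);
  match goal with H : seq_eval_small_step Skip _ _ _ _ _ _ |- _ => inversion H end.
Qed.

Lemma same_agree : forall s r1 m1 r2 m2, seq_same_obs s r1 m1 s r2 m2 -> agree1 s r1 m1 r2 m2.
Proof.
  unfold agree1. intros. 
  assert (L := seq_olen _ _ _ _ _ _ _ H0 _ _ _ _ _ _ H1).
  assert (M1 : multi_seq s r1 m1 s1 r1' m1' (o1 ++ [])) by (econstructor; eauto; constructor).
  assert (M2 : multi_seq s r2 m2 s2 r2' m2' (o2 ++ [])) by (econstructor; eauto; constructor).
  rewrite !app_nil_r in M1, M2.
  destruct (H _ _ _ _ _ _ _ _ M1 M2) as [[l E]|[l E]]; subst; rewrite length_app in L;
  assert (l = []) by (destruct l; simpl in L; auto; lia); subst; rewrite app_nil_r; auto.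
Qed.

Lemma same_step : forall s r1 m1 r2 m2 s' r1' m1' r2' m2' os, seq_same_obs s r1 m1 s r2 m2 ->
  seq_eval_small_step s r1 m1 s' r1' m1' os -> seq_eval_small_step s r2 m2 s' r2' m2' os ->
  seq_same_obs s' r1' m1' s' r2' m2'.
Proof.
  unfold seq_same_obs. intros.
  assert (M1 := multi_seq_trans _ _ _ _ _ _ _ _ _ _ _ H0 H2).
  assert (M2 := multi_seq_trans _ _ _ _ _ _ _ _ _ _ _ H1 H3).
  destruct (H _ _ _ _ _ _ _ _ M1 M2) as [[l E]|[l E]]; [left|right]; exists l;
  rewrite <- app_assoc in E; apply app_inv_head in E; auto.
Qed.

Definition INV (t : com) (rho1 : state) (mu1 : mem) (bt1 : bool) (rho2 : state) (mu2 : mem) (bt2 : bool) : Prop :=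
  bt1 = bt2 /\ exists s P PA Q QA, R bt1 P PA t s Q QA /\ pub_equiv P rho1 rho2 /\ rho1 bvar = rho2 bvar /\
  (bt1 = false -> rho1 bvar = 0 /\ pub_equiv PA mu1 mu2 /\ seq_same_obs s rho1 mu1 s rho2 mu2 /\ hc_ok t rho1 /\ hc_ok t rho2) /\
  (bt1 = true -> rho1 bvar = 1 \/ (rho1 bvar = 0 /\ hc_neg t rho1 /\ hc_neg t rho2)).

Lemma main_multi : forall t rho1 mu1 bt1 t1' rho1' mu1' bt1' ds os1,
  multi_spec t rho1 mu1 bt1 t1' rho1' mu1' bt1' ds os1 ->
  forall rho2 mu2 bt2 t2' rho2' mu2' bt2' os2,
  multi_spec t rho2 mu2 bt2 t2' rho2' mu2' bt2' ds os2 ->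
  INV t rho1 mu1 bt1 rho2 mu2 bt2 -> os1 = os2.
Proof.
  induction 1; intros ra ma bta ta' ra' ma' bta' osb M2 Hinv.
  - apply multi_len in M2. destruct osb; simpl in M2; auto. discriminate.
  - inversion M2; subst.
    + apply multi_len in M2. destruct (ds1 ++ ds2) eqn:E; [|discriminate].
      apply app_eq_nil in E as [-> ->]. apply step_olen in H. apply multi_len in H0.
      destruct os1, os2; simpl in *; auto; discriminate.
    + match goal with S : spec_eval_small_step c1 ra ma bta _ _ _ _ _ _ |- _ => rename S into S2 end.
      match goal with E : _ ++ _ = _ ++ _ |- _ => rename E into E2 end.
      destruct (app_len_inv _ _ _ _ (step_dlen _ _ _ _ _ _ _ _ _ _ H _ _ _ _ _ _ _ _ _ S2) (eq_sym E2)) as [<- <-].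
      destruct Hinv as [<- [s [P [PA [Q [QA [HR [Hpe [Hb [Hp1 Hp2]]]]]]]]]].
      assert (Hp1' : bt1 = false -> rho1 bvar = 0 /\ pub_equiv PA mu1 ma /\ agree1 s rho1 mu1 ra ma /\ hc_ok c1 rho1 /\ hc_ok c1 ra).
      { intros E. destruct (Hp1 E) as [A [B [C [D1 D2]]]]. split; [exact A|split; [exact B|split; [apply same_agree; exact C|split; [exact D1|exact D2]]]]. }
      destruct (step_R _ _ _ _ _ _ _ HR _ _ _ _ _ _ _ _ _ _ _ _ _ _ _ Hpe Hb Hp1' Hp2 H S2) as [<- [<- [<- Hpost]]].
      f_equal. eapply IHmulti_spec; eauto.
      destruct Hpost as [s' [P' [PA' [HR' [Hpe' [Hb' [Hq1 Hq2]]]]]]].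
      split; auto. exists s', P', PA', Q, QA. split; [auto|split; [auto|split; [auto|split]]].
      * intros Hf. destruct (Hq1 Hf) as [F1 [F2 [F3 [F4 [F5 F6]]]]]. split; [auto|split; [auto|split; [|split; auto]]].
        destruct F6 as [[-> [-> [-> [-> ->]]]]|[os [Hs1 Hs2]]]; destruct (Hp1 F1) as [_ [_ [Z _]]];
          [exact Z | eapply same_step; eauto].
      * exact Hq2.
Qed.

Theorem theorem3p6 :
  forall (P : pub_vars) (PA : pub_arrs) (c : com)
         (rho1 rho2 : state) (mu1 mu2 : mem),
    ~ In bvar (used_vars c) ->
    rho1 bvar = 0 -> rho2 bvar = 0 ->
    (forall a, 0 < length (mu1 a)) ->
    (forall a, 0 < length (mu2 a)) ->
    pub_equiv P rho1 rho2 ->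
    pub_equiv PA mu1 mu2 ->
    seq_same_obs c rho1 mu1 c rho2 mu2 ->
    forall (ac : acom) (P' : pub_vars) (PA' : pub_arrs),
      static_tracking c P PA true = (ac, P', PA') ->
      spec_same_obs (fs_flex_slh ac) rho1 mu1 false (fs_flex_slh ac) rho2 mu2 false.
Proof.
  intros P PA c rho1 rho2 mu1 mu2 Hb Hb1 Hb2 _ _ Hpe Hpa Hseq ac P' PA' E.
  destruct (F_R _ _ _ _ _ _ _ Hb E) as [HR Hh].
  unfold spec_same_obs. intros. eapply main_multi; eauto.
  split; auto. exists c, P, PA, P', PA'. repeat split; auto; try congruence;
  try (apply hc_none_ok; auto); try (intros; discriminate).
Qed.
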